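(* Let $p>1$ be an integer and let $u^{(p)}$ be the fixed point of the substitution $\varphi_p(L)=L^pS$, $\varphi_p(S)=M$, $\varphi_p(M)=L^{p-1}S$. For each $n\in\mathbb N$ there are numbers $s_n,m_n\in\mathbb N$ such that $\mathcal P_u(n)\subset\{\Psi^{(n)}_1,\dots,\Psi^{(n)}_9\}$, where $\Psi^{(n)}_1=(n-s_n-m_n+2,\ s_n-1,\ m_n-1)$, $\Psi^{(n)}_2=(n-s_n-m_n+1,\ s_n-1,\ m_n)$, $\Psi^{(n)}_3=(n-s_n-m_n,\ s_n-1,\ m_n+1)$, $\Psi^{(n)}_4=(n-s_n-m_n+1,\ s_n,\ m_n-1)$, $\Psi^{(n)}_5=(n-s_n-m_n,\ s_n,\ m_n)$, $\Psi^{(n)}_6=(n-s_n-m_n-1,\ s_n,\ m_n+1)$, $\Psi^{(n)}_7=(n-s_n-m_n,\ s_n+1,\ m_n-1)$, $\Psi^{(n)}_8=(n-s_n-m_n-1,\ s_n+1,\ m_n)$, $\Psi^{(n)}_9=(n-s_n-m_n-2,\ s_n+1,\ m_n+1)$. Consequently $\mathrm{AC}(n)\le 9$.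
   Context: $u^{(p)}=\lim_{n\to\infty}\varphi_p^n(L)$ is the unique infinite word over $\{L,S,M\}$ fixed by $\varphi_p$. For a finite word $w$, its Parikh vector is $\Psi(w)=(|w|_L,|w|_S,|w|_M)$, where $|w|_a$ is the number of occurrences of $a$ in $w$. $\mathcal P_u(n)$ denotes the set of Parikh vectors of all factors of $u^{(p)}$ of length $n$, and the Abelian complexity is $\mathrm{AC}(n)=\#\mathcal P_u(n)$. *)

(* Defs.v *)
From mathcomp Require Import all_boot all_algebra.
Set Implicit Arguments. Unset Strict Implicit. Unset Printing Implicit Defensive.

Inductive letter := L | S | M.

Definition phi_letter (p : nat) (a : letter) : seq letter :=
  match a with
  | L => rcons (nseq p L) S
  | S => [:: M]
  | M => rcons (nseq p.-1 L) S
  end.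

Definition phi (p : nat) (w : seq letter) : seq letter :=
  flatten (map (phi_letter p) w).

(* u^(p) = lim phi_p^n(L): the i-th letter is read in phi_p^(i+1)(L), which
   has length > i and is a prefix of all further iterates *)
Definition u (p : nat) (i : nat) : letter :=
  nth L (iter i.+1 (phi p) [:: L]) i.

Definition factor (p i n : nat) : seq letter := mkseq (fun k => u p (i + k)) n.

Definition isL (a : letter) : bool := if a is L then true else false.
Definition isS (a : letter) : bool := if a is S then true else false.
Definition isM (a : letter) : bool := if a is M then true else false.

Definition parikh (w : seq letter) : int * int * int :=
  (Posz (count isL w), Posz (count isS w), Posz (count isM w)).

Definition Pu (p n : nat) (v : int * int * int) : Prop :=
  exists i, parikh (factor p i n) = v.

(* #A <= k for a (Prop) set A : A is covered by a list of at most k elements *)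
Definition card_le (T : eqType) (A : T -> Prop) (k : nat) : Prop :=
  exists s : seq T, (size s <= k)%N /\ forall x, A x -> x \in s.

Local Open Scope ring_scope.

Definition Psi_list (n s m : nat) : seq (int * int * int) :=
  let N := Posz n in let s := Posz s in let m := Posz m in
  [:: (N - s - m + 2, s - 1, m - 1);
      (N - s - m + 1, s - 1, m);
      (N - s - m,     s - 1, m + 1);
      (N - s - m + 1, s,     m - 1);
      (N - s - m,     s,     m);
      (N - s - m - 1, s,     m + 1);
      (N - s - m,     s + 1, m - 1);
      (N - s - m - 1, s + 1, m);
      (N - s - m - 2, s + 1, m + 1)].

(* Main.v *)
Require Import Defs.
From Stdlib Require Import ZArith Classical.
From HB Require Import structures.
From mathcomp Require Import all_boot all_algebra zify.
Set Implicit Arguments. Unset Strict Implicit. Unset Printing Implicit Defensive.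


Definition tau := phi_letter.
Definition w (p k : nat) := iter k (phi p) [:: L].

Lemma phi_cat p s1 s2 : phi p (s1 ++ s2) = phi p s1 ++ phi p s2.
Proof. by rewrite /phi map_cat flatten_cat. Qed.
Lemma phi_cons p a s : phi p (a :: s) = tau p a ++ phi p s.
Proof. by []. Qed.

Lemma size_tau p a : 0 < p -> size (tau p a) = match a with L => p.+1 | S => 1 | M => p end.
Proof. by case: a => //= hp; rewrite size_rcons size_nseq // prednK. Qed.

Lemma size_phi_ge p s : 0 < p -> size s <= size (phi p s).
Proof.
move=> hp; elim: s => //= a s IH; rewrite phi_cons size_cat.
have := size_tau a hp; case: a => H; rewrite H; lia.
Qed.

Lemma w_prefix p k : 0 < p -> exists s, w p k.+1 = w p k ++ s.
Proof.
move=> hp; elim: k => [|k [s Hs]].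
  by exists (rcons (nseq p.-1 L) S); rewrite /w /= /phi /= cats0 -(prednK hp).
exists (phi p s); have -> : w p k.+2 = phi p (w p k.+1) by [].
by rewrite {1}Hs phi_cat.
Qed.

Lemma w_prefix_le p k k' : 0 < p -> k <= k' -> exists s, w p k' = w p k ++ s.
Proof.
move=> hp /subnKC <-; elim: (k' - k) => [|d [s Hs]]; first by exists [::]; rewrite addn0 cats0.
have [s' Hs'] := w_prefix (k + d) hp.
by exists (s ++ s'); rewrite addnS Hs' Hs catA.
Qed.

Lemma w_head p k : 0 < p -> exists s, w p k = L :: s.
Proof. move=> hp; have [s ->] := w_prefix_le hp (leq0n k); by exists s. Qed.

Lemma size_w p k : 0 < p -> k < size (w p k).
Proof.
move=> hp; elim: k => [//|k IH].
have [s Hs] := w_head k hp.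
have -> : w p k.+1 = phi p (w p k) by [].
rewrite Hs phi_cons size_cat size_tau //.
have := size_phi_ge s hp. move: IH; rewrite Hs /=. lia.
Qed.

Lemma u_nth p k i : 0 < p -> i < size (w p k) -> u p i = nth L (w p k) i.
Proof.
move=> hp hi; rewrite /u -/(w p i.+1).
have [s1 H1] := w_prefix_le hp (leq_maxl k i.+1).
have [s2 H2] := w_prefix_le hp (leq_maxr k i.+1).
have hi2 : i < size (w p i.+1) by apply: ltn_trans (size_w _ hp).
have := congr1 (fun x => nth L x i) H1; rewrite nth_cat hi => <-.
by have := congr1 (fun x => nth L x i) H2; rewrite nth_cat hi2 => <-.
Qed.

Definition pos p j := size (phi p (mkseq (u p) j)).

Lemma mkseq_w p k j : 0 < p -> j <= size (w p k) -> mkseq (u p) j = take j (w p k).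
Proof.
move=> hp hj; apply: (@eq_from_nth _ L); first by rewrite size_mkseq size_take_min; lia.
move=> i; rewrite size_mkseq => hi; rewrite nth_mkseq // nth_take //.
by apply: u_nth => //; lia.
Qed.

Lemma u_pos p j r : 0 < p -> r < size (tau p (u p j)) -> u p (pos p j + r) = nth L (tau p (u p j)) r.
Proof.
move=> hp hr.
set k := pos p j + r + j.
have hk := size_w k hp.
have hj : j < size (w p k) by move: hk; rewrite /k; lia.
have E : w p k = mkseq (u p) j ++ u p j :: drop j.+1 (w p k).
  rewrite (mkseq_w hp (ltnW hj)).
  by rewrite -[in LHS](cat_take_drop j (w p k)) (drop_nth L hj) -(u_nth hp hj).
have Ek : w p k.+1 = phi p (w p k) by [].
have hsz : pos p j + r < size (w p k.+1).
  have := size_w k.+1 hp; rewrite /k; lia.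
rewrite (u_nth hp hsz) Ek E phi_cat phi_cons nth_cat /pos.
rewrite ltnNge leq_addr /= addKn nth_cat hr //.
Qed.

Lemma factor_cat p i a b : factor p i (a + b) = factor p i a ++ factor p (i + a) b.
Proof.
rewrite /factor /mkseq iotaD map_cat; congr (_ ++ _).
by rewrite add0n -{1}(addn0 a) iotaDl -map_comp; apply: eq_map => x /=; rewrite addnA.
Qed.

Lemma factor0 p i : factor p i 0 = [::]. Proof. by []. Qed.
Lemma factor1 p i : factor p i 1 = [:: u p i]. Proof. by rewrite /factor /mkseq /= addn0. Qed.
Lemma size_factor p i n : size (factor p i n) = n. Proof. by rewrite size_mkseq. Qed.

Lemma mkseq_factor p j : mkseq (u p) j = factor p 0 j.
Proof. by apply: eq_mkseq => x; rewrite add0n. Qed.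

Lemma pos_add p j m : pos p (j + m) = pos p j + size (phi p (factor p j m)).
Proof. by rewrite /pos !mkseq_factor factor_cat phi_cat size_cat. Qed.

Lemma size_phi1 p a : phi p [:: a] = tau p a. Proof. by rewrite phi_cons cats0. Qed.

Lemma pos_S p j : pos p j.+1 = pos p j + size (tau p (u p j)).
Proof. by rewrite -addn1 pos_add factor1 size_phi1. Qed.

Lemma pos0 p : pos p 0 = 0. Proof. by []. Qed.

Lemma u0 p : 0 < p -> u p 0 = L.
Proof. move=> hp; rewrite (@u_nth p 0 0 hp) //. Qed.

Lemma factor_tau p j : 0 < p -> factor p (pos p j) (size (tau p (u p j))) = tau p (u p j).
Proof.
move=> hp; apply: (@eq_from_nth _ L); first by rewrite size_factor.
move=> r; rewrite size_factor => hr; rewrite /factor nth_mkseq //; exact: u_pos.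
Qed.

Lemma factor_phi p j m : 0 < p -> factor p (pos p j) (size (phi p (factor p j m))) = phi p (factor p j m).
Proof.
move=> hp; elim: m => [|m IH]; first by rewrite factor0.
rewrite -addn1 factor_cat phi_cat size_cat factor_cat IH factor1 size_phi1.
by rewrite -pos_add factor_tau.
Qed.

Lemma pos_mono p a b : a <= b -> pos p a <= pos p b.
Proof. by move=> /subnKC <-; rewrite pos_add leq_addr. Qed.

Lemma pos_gt p j : 0 < p -> 0 < j -> j < pos p j.
Proof.
move=> hp; elim: j => [//|[|j] IH _].
  by rewrite pos_S pos0 u0 // size_tau.
rewrite pos_S; have := IH isT; have := size_tau (u p j.+1) hp; case: (u p j.+1) => ->; lia.
Qed.

Lemma size_tau_pos p a : 0 < p -> 0 < size (tau p a).
Proof. by move=> hp; rewrite size_tau //; case: a. Qed.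

Lemma decomp p i : 0 < p -> exists al r, i = pos p al + r /\ r < size (tau p (u p al)).
Proof.
move=> hp; elim: i => [|i [al [r [-> hr]]]].
  by exists 0, 0; rewrite pos0; split => //; apply: size_tau_pos.
case: (ltnP r.+1 (size (tau p (u p al)))) => h.
  by exists al, r.+1; rewrite addnS.
exists al.+1, 0; rewrite pos_S addn0; split; last exact: size_tau_pos.
have -> : size (tau p (u p al)) = r.+1 by apply/eqP; rewrite eqn_leq h hr.
by rewrite addnS.
Qed.

Lemma count_take_tau p a t (P : pred letter) : 1 < p -> ~~ P L -> t < size (tau p a) ->
  count P (take t (tau p a)) = 0.
Proof.
move=> hp hL; case: a => /=.
- rewrite size_rcons -cats1 take_cat size_nseq ltnS leq_eqVlt => /orP [/eqP ->|h].
    by rewrite ltnn subnn take0 cats0 count_nseq (negbTE hL).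
  by rewrite h take_nseq ?count_nseq ?(negbTE hL) //; apply: ltnW.
- by case: t.
- rewrite size_rcons -cats1 take_cat size_nseq ltnS leq_eqVlt => /orP [/eqP ->|h].
    by rewrite ltnn subnn take0 cats0 count_nseq (negbTE hL).
  by rewrite h take_nseq ?count_nseq ?(negbTE hL) //; apply: ltnW.
Qed.

Lemma factor_take p j t : 0 < p -> t <= size (tau p (u p j)) -> factor p (pos p j) t = take t (tau p (u p j)).
Proof.
move=> hp ht; rewrite -(factor_tau j hp) -(subnKC ht) factor_cat take_size_cat //.
by rewrite size_factor.
Qed.

Lemma nth_rn m r : r < m.+1 -> nth L (rcons (nseq m L) S) r = if r.+1 == m.+1 then S else L.
Proof.
move=> hr; rewrite nth_rcons size_nseq nth_nseq.
case: (ltnP r m) => h; first by rewrite eqSS ltn_eqF.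
have -> : r = m by apply/eqP; rewrite eqn_leq h -ltnS hr.
by rewrite !eqxx.
Qed.

Lemma nth_tau p a r : 1 < p -> r < size (tau p a) ->
  nth L (tau p a) r = match a with S => M | _ => if r.+1 == size (tau p a) then S else L end.
Proof.
move=> hp; case: a => /=.
- by rewrite size_rcons size_nseq => hr; rewrite nth_rn.
- by case: r.
- by rewrite size_rcons size_nseq => hr; rewrite nth_rn.
Qed.

Definition ok2 (a b : letter) : bool :=
  match a, b with L, L | L, S | S, L | S, M | M, L => true | _, _ => false end.

Lemma adj p i : 1 < p -> ok2 (u p i) (u p i.+1).
Proof.
move=> hp; have hp0 : 0 < p by apply: ltnW.
elim/ltn_ind: i => i IH.
have [al [r [Ei hr]]] := decomp i hp0.
case: (ltnP r.+1 (size (tau p (u p al)))) => h.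
  rewrite Ei -addnS !u_pos // !nth_tau //.
  move: h hr; case: (u p al) => //=; rewrite ?size_rcons ?size_nseq => h hr.
  - by rewrite ltn_eqF //; case: eqP.
  - by rewrite ltn_eqF //; case: eqP.
have Er : r.+1 = size (tau p (u p al)) by apply/eqP; rewrite eqn_leq h hr.
have Ei1 : i.+1 = pos p al.+1 + 0 by rewrite pos_S addn0 -Er Ei addnS.
rewrite Ei1 Ei !u_pos ?size_tau_pos // !nth_tau ?size_tau_pos // Er eqxx.
have h1 : (1 == p.+1) = false by case: (p) hp.
have h2 : (1 == p.-1.+1) = false by case: (p) hp => [|[|]].
case Ea: (u p al); case Eb: (u p al.+1) => //=; rewrite ?size_rcons ?size_nseq ?h1 ?h2 //=.
(* u al = S, u al.+1 = S *)
have hal : 0 < al by case: al Ea {Ei Ei1 hr h Er Eb} => //; rewrite u0.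
have : al < i by rewrite Ei; have := pos_gt hp0 hal; lia.
by move/IH; rewrite Ea Eb.
Qed.

Lemma phi_counts p s : 0 < p ->
  [/\ count isS (phi p s) + count isS s = size s,
      count isM (phi p s) = count isS s &
      size (phi p s) + p * count isS s + count isM s = p.+1 * size s].
Proof.
move=> hp; elim: s => [|a s [IH1 IH2 IH3]]; first by split => //=; rewrite !muln0.
rewrite phi_cons !count_cat size_cat /=.
have E1 : forall m, count isS (rcons (nseq m L) S) = 1 /\ count isM (rcons (nseq m L) S) = 0
  /\ size (rcons (nseq m L) S) = m.+1.
  by move=> m; rewrite -cats1 !count_cat !count_nseq size_cat size_nseq /=; lia.
case: a => /=; last first.
- have [-> [-> ->]] := E1 p.-1; rewrite prednK //; split; lia.
- split; lia.
- have [-> [-> ->]] := E1 p; split; lia.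
Qed.

Lemma size_phi_ns p s : 1 < p -> size s + count (fun x => ~~ isS x) s <= size (phi p s).
Proof.
move=> hp; elim: s => [//|a s IH]; rewrite phi_cons size_cat /=.
have := size_tau a (ltnW hp); case: a => -> /=; lia.
Qed.

Lemma window p i n : 0 < p -> exists al be r t,
  [/\ al <= be, i = pos p al + r, r < size (tau p (u p al)), i + n = pos p be + t
    & t < size (tau p (u p be))].
Proof.
move=> hp; have [al [r [Ei hr]]] := decomp i hp; have [be [t [Ein ht]]] := decomp (i + n) hp.
exists al, be, r, t; split => //.
case: (leqP al be) => // hlt; exfalso.
have := pos_mono p hlt; rewrite pos_S; lia.
Qed.

Lemma window_facts p i n al be r t : 1 < p -> al <= be -> i = pos p al + r ->
  r < size (tau p (u p al)) -> i + n = pos p be + t -> t < size (tau p (u p be)) ->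
  [/\ r + n = size (phi p (factor p al (be - al))) + t,
     count isS (factor p i n) = count isS (phi p (factor p al (be - al))),
     count isM (factor p i n) = count isM (phi p (factor p al (be - al))),
     u p i = nth L (tau p (u p al)) r &
     u p (i + n) = nth L (tau p (u p be)) t].
Proof.
move=> hp hab Ei hr Ein ht; have hp0 : 0 < p by apply: ltnW.
set V := factor p al (be - al).
have Epos : pos p be = pos p al + size (phi p V) by rewrite -pos_add subnKC.
have Elen : r + n = size (phi p V) + t by move: Ein; rewrite Ei Epos; lia.
have E : factor p (pos p al) r ++ factor p i n = phi p V ++ factor p (pos p be) t.
  by rewrite Ei -factor_cat Elen factor_cat factor_phi // Epos.
have Z1 := factor_take (j := al) hp0 (ltnW hr).
have Z2 := factor_take (j := be) hp0 (ltnW ht).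
split => //.
- have := congr1 (count isS) E; rewrite !count_cat Z1 Z2 !count_take_tau //; lia.
- have := congr1 (count isM) E; rewrite !count_cat Z1 Z2 !count_take_tau //; lia.
- by rewrite Ei u_pos.
- by rewrite Ein u_pos.
Qed.

Lemma V_small p n al be r t : 1 < p -> r < size (tau p (u p al)) ->
  r + n = size (phi p (factor p al (be - al))) + t ->
  (be - al <= n) /\ (2 < n -> be - al < n).
Proof.
move=> hp hr; case E: (be - al) => [|m]; first by move=> _; split => //; lia.
rewrite -[m.+1]add1n factor_cat factor1 cat1s phi_cons size_cat addnC => Hl.
have := size_phi_ns (factor p (al + 1) m) hp; rewrite size_factor => Hns.
split; first lia.
move=> hn; case: (ltnP m 2) => hm; first lia.
suff : 0 < count (fun x => ~~ isS x) (factor p (al + 1) m) by lia.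
rewrite -(subnKC hm) factor_cat count_cat /factor /mkseq /=.
have := adj (al + 1) hp; rewrite !addn0 addn1 addnS.
rewrite addn0; by case: (u p al.+1); case: (u p al.+2).
Qed.



Definition letter_eqb (a b : letter) : bool :=
  match a, b with L, L | S, S | M, M => true | _, _ => false end.
Lemma letter_eqP : Equality.axiom letter_eqb.
Proof. by case; case; constructor. Qed.
HB.instance Definition _ := hasDecEq.Build letter letter_eqP.

Local Open Scope Z_scope.
Definition lc (a : letter) : nat := match a with L => 0 | S => 1 | M => 2 end.
Definition inr (lo hi x : Z) : bool := (Z.leb lo x && Z.leb x hi).
Definition zi (x : Z) : nat := Z.to_nat x.
Definition TT := seq (seq (seq (seq (seq (seq Z))))).

Definition INVt (T : TT) (k dS dM : Z) (f g f' g' : letter) : bool :=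
  [&& inr (-4) 4 k, inr (-3) 3 dS, inr (-3) 3 dM &
    Z.testbit (List.nth (zi (dS + 3)) (List.nth (lc g') (List.nth (lc f') (List.nth (lc g)
      (List.nth (lc f) (List.nth (zi (k + 4)) T [::]) [::]) [::]) [::]) [::]) 0) (dM + 3)].

Definition rng4 : seq Z := [:: -4; -3; -2; -1; 0; 1; 2; 3; 4].
Definition rng3 : seq Z := [:: -3; -2; -1; 0; 1; 2; 3].
Definition allL (P : letter -> bool) := [&& P L, P S & P M].

Definition cls (a : letter) : seq (letter * Z * Z * Z * Z) :=
  match a with
  | L => [:: (L, 0, 0, -1, 1); (S, 0, 1, 0, 1)]
  | M => [:: (L, 0, 0, -2, 1); (S, -1, 1, -1, 1)]
  | S => [:: (M, 0, 0, 0, 0)]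
  end.
Definition cl (c : letter * Z * Z * Z * Z) := c.1.1.1.1.
Definition lo0 (c : letter * Z * Z * Z * Z) := c.1.1.1.2.
Definition lo1 (c : letter * Z * Z * Z * Z) := c.1.1.2.
Definition hi0 (c : letter * Z * Z * Z * Z) := c.1.2.
Definition hi1 (c : letter * Z * Z * Z * Z) := c.2.

Definition closure_ok T (F : Z -> Z -> Z -> Z -> Z -> bool) (k1 eS eM : Z) (a b a' b' : letter) :=
  all (fun ca => all (fun cb => all (fun ca' => all (fun cb' =>
   let A0 := ((k1 - eM) - hi0 ca + lo0 cb + lo0 ca' - hi0 cb') in
   let A1 := ((k1 - eS) - hi1 ca + lo1 cb + lo1 ca' - hi1 cb') in
   let B0 := ((k1 - eM) - lo0 ca + hi0 cb + hi0 ca' - lo0 cb') in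
   let B1 := ((k1 - eS) - lo1 ca + hi1 cb + hi1 ca' - lo1 cb') in
   all (fun k => if F A0 A1 B0 B1 k then INVt T k (k1 - eS) eS (cl ca) (cl cb) (cl ca') (cl cb') else true) rng4)
   (cls b')) (cls a')) (cls b)) (cls a).

Definition allstates (P : Z -> Z -> Z -> letter -> letter -> letter -> letter -> bool) :=
  all (fun k => all (fun dS => all (fun dM =>
    allL (fun f => allL (fun g => allL (fun f' => allL (fun g' => P k dS dM f g f' g'))))) rng3) rng3) rng4.

Definition check_closure T F :=
  allstates (fun k dS dM f g f' g' => if INVt T k dS dM f g f' g' then closure_ok T F k dS dM f g f' g' else true).

Definition cond (A0 A1 B0 B1 k q : Z) : bool := (Z.leb (A0 + A1 * q) k && Z.leb k (B0 + B1 * q)).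
Definition F2 (A0 A1 B0 B1 k : Z) : bool := cond A0 A1 B0 B1 k 2.
Definition F3 (A0 A1 B0 B1 k : Z) : bool :=
  has (fun q : nat => cond A0 A1 B0 B1 k (Z.of_nat q)) (iota 3 (Z.to_nat (4 + Z.abs A0 + Z.abs B0))) ||
  [&& Z.leb A1 0, Z.leb 0 B1, (Z.ltb A1 0) || (Z.leb A0 k) & (Z.ltb 0 B1) || (Z.leb k B0)].

Definition s0 (a : letter) : Z := match a with L => 1 | S => 1 | M => 0 end.
Definition s1 (a : letter) : Z := match a with L => 1 | S => 0 | M => 1 end.

Definition check_outr T (G : Z -> Z -> bool) :=
  allstates (fun k eS eM a b1 a' b' => INVt T k eS eM a b1 a' b' ==> negb (Z.eqb k 4) ||
     G (4 - eM + s0 b1 - s0 a - s0 b' + 2) (4 - eS + s1 b1 - s1 a - s1 b')).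
Definition G2 (C0 C1 : Z) : bool := Z.ltb 4 (C0 + C1 * 2).
Definition G3 (C0 C1 : Z) : bool := (Z.leb 0 C1 && Z.ltb 4 (C0 + C1 * 3)).

Definition check_final T :=
  allstates (fun k dS dM f g f' g' => INVt T k dS dM f g f' g' ==> negb (Z.eqb k 0) || (inr (-2) 2 dS && inr (-2) 2 dM)).

Definition wcS (n : nat) (x : seq letter) : Z := Z.of_nat (count isS (take n x)).
Definition wcM (n : nat) (x : seq letter) : Z := Z.of_nat (count isM (take n x)).
Definition check_base T :=
  all (fun n => all (fun n' =>
    allL (fun x0 => allL (fun x1 => allL (fun x2 => allL (fun y0 => allL (fun y1 => allL (fun y2 =>
      (ok2 x0 x1 && ok2 x1 x2 && ok2 y0 y1 && ok2 y1 y2) ==>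
      INVt T (Z.of_nat n - Z.of_nat n') (wcS n [:: x0; x1; x2] - wcS n' [:: y0; y1; y2])
        (wcM n [:: x0; x1; x2] - wcM n' [:: y0; y1; y2]) x0 (nth L [:: x0; x1; x2] n) y0 (nth L [:: y0; y1; y2] n')))))))) (iota 0 3)) (iota 0 3).
Definition T2 : TT :=
 [:: [:: [:: [:: [:: [:: 16; 28; 30; 14; 0; 0; 0]; [:: 0; 24; 30; 14; 0; 0; 0]; [:: 16; 60; 30; 4; 0; 0; 0]]; [:: [:: 24; 30; 15; 0; 0; 0; 0]; [:: 0; 28; 30; 6; 0; 0; 0]; [:: 24; 28; 14; 0; 0; 0; 0]]; [:: [:: 0; 12; 14; 7; 0; 0; 0]; [:: 0; 0; 30; 15; 0; 0; 0]; [:: 0; 28; 14; 6; 0; 0; 0]]]; [:: [:: [:: 24; 30; 15; 0; 0; 0; 0]; [:: 0; 28; 30; 6; 0; 0; 0]; [:: 24; 28; 14; 0; 0; 0; 0]]; [:: [:: 28; 30; 7; 0; 0; 0; 0]; [:: 16; 30; 15; 0; 0; 0; 0]; [:: 28; 30; 0; 0; 0; 0; 0]]; [:: [:: 0; 14; 15; 1; 0; 0; 0]; [:: 0; 12; 14; 7; 0; 0; 0]; [:: 0; 28; 14; 0; 0; 0; 0]]]; [:: [:: [:: 0; 12; 14; 7; 0; 0; 0]; [:: 0; 0; 30; 15; 0; 0; 0]; [:: 0; 28; 14; 6; 0; 0; 0]]; [:: [:: 0; 14; 15; 1; 0; 0; 0]; [:: 0; 12; 14; 7; 0; 0; 0];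 [:: 0; 28; 14; 0; 0; 0; 0]]; [:: [:: 0; 4; 14; 7; 0; 0; 0]; [:: 0; 0; 12; 7; 1; 0; 0]; [:: 0; 8; 14; 6; 0; 0; 0]]]]; [:: [:: [:: [:: 0; 24; 30; 14; 0; 0; 0]; [:: 0; 0; 60; 30; 6; 0; 0]; [:: 0; 56; 28; 12; 0; 0; 0]]; [:: [:: 0; 28; 30; 6; 0; 0; 0]; [:: 0; 16; 30; 14; 0; 0; 0]; [:: 0; 60; 30; 0; 0; 0; 0]]; [:: [:: 0; 0; 30; 15; 0; 0; 0]; [:: 0; 0; 28; 14; 6; 0; 0]; [:: 0; 16; 28; 14; 0; 0; 0]]]; [:: [:: [:: 0; 28; 30; 6; 0; 0; 0]; [:: 0; 16; 30; 14; 0; 0; 0]; [:: 0; 60; 30; 0; 0; 0; 0]]; [:: [:: 16; 30; 15; 0; 0; 0; 0]; [:: 0; 28; 30; 0; 0; 0; 0]; [:: 16; 28; 6; 0; 0; 0; 0]]; [:: [:: 0; 12; 14; 7; 0; 0; 0]; [:: 0; 0; 28; 15; 0; 0; 0]; [:: 0; 24; 14; 0; 0; 0; 0]]]; [:: [:: [:: 0; 0; 30; 15; 0; 0; 0]; [:: 0; 0; 28; 14; 6; 0; 0]; [:: 0; 16; 28; 14; 0; 0; 0]]; [:: [:: 0; 12; 14; 7; 0; 0; 0]; [:: 0; 0; 28; 15; 0; 0; 0]; [:: 0; 24; 14; 0; 0; 0; 0]]; [:: [:: 0; 0; 12; 7; 1; 0; 0]; [:: 0; 0; 0; 14; 7;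 0; 0]; [:: 0; 0; 12; 6; 0; 0; 0]]]]; [:: [:: [:: [:: 16; 60; 30; 4; 0; 0; 0]; [:: 0; 56; 28; 12; 0; 0; 0]; [:: 48; 56; 28; 0; 0; 0; 0]]; [:: [:: 24; 28; 14; 0; 0; 0; 0]; [:: 0; 60; 30; 0; 0; 0; 0]; [:: 56; 28; 4; 0; 0; 0; 0]]; [:: [:: 0; 28; 14; 6; 0; 0; 0]; [:: 0; 16; 28; 14; 0; 0; 0]; [:: 0; 24; 12; 0; 0; 0; 0]]]; [:: [:: [:: 24; 28; 14; 0; 0; 0; 0]; [:: 0; 60; 30; 0; 0; 0; 0]; [:: 56; 28; 4; 0; 0; 0; 0]]; [:: [:: 28; 30; 0; 0; 0; 0; 0]; [:: 16; 28; 6; 0; 0; 0; 0]; [:: 56; 12; 0; 0; 0; 0; 0]]; [:: [:: 0; 28; 14; 0; 0; 0; 0]; [:: 0; 24; 14; 0; 0; 0; 0]; [:: 16; 28; 4; 0; 0; 0; 0]]]; [:: [:: [:: 0; 28; 14; 6; 0; 0; 0]; [:: 0; 16; 28; 14; 0; 0; 0]; [:: 0; 24; 12; 0; 0; 0; 0]]; [:: [:: 0; 28; 14; 0; 0; 0; 0]; [:: 0; 24; 14; 0; 0; 0; 0]; [:: 16; 28; 4; 0; 0; 0; 0]]; [:: [:: 0; 8; 14; 6; 0; 0; 0]; [:: 0; 0; 12; 6; 0; 0; 0]; [:: 0; 8; 12; 0; 0; 0; 0]]]]]; [:: [:: [:: [:: [:: 0; 28; 30; 14; 0; 0; 0]; [::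 0; 16; 60; 30; 6; 0; 0]; [:: 0; 56; 28; 12; 0; 0; 0]]; [:: [:: 16; 28; 30; 6; 0; 0; 0]; [:: 0; 24; 30; 14; 0; 0; 0]; [:: 16; 60; 30; 0; 0; 0; 0]]; [:: [:: 0; 8; 30; 15; 0; 0; 0]; [:: 0; 0; 28; 14; 6; 0; 0]; [:: 0; 24; 28; 14; 0; 0; 0]]]; [:: [:: [:: 16; 28; 30; 6; 0; 0; 0]; [:: 0; 24; 30; 14; 0; 0; 0]; [:: 16; 60; 30; 0; 0; 0; 0]]; [:: [:: 24; 30; 15; 0; 0; 0; 0]; [:: 0; 28; 30; 0; 0; 0; 0]; [:: 24; 28; 6; 0; 0; 0; 0]]; [:: [:: 0; 12; 14; 7; 0; 0; 0]; [:: 0; 0; 30; 15; 0; 0; 0]; [:: 0; 28; 14; 0; 0; 0; 0]]]; [:: [:: [:: 0; 8; 30; 15; 0; 0; 0]; [:: 0; 0; 28; 14; 6; 0; 0]; [:: 0; 24; 28; 14; 0; 0; 0]]; [:: [:: 0; 12; 14; 7; 0; 0; 0]; [:: 0; 0; 30; 15; 0; 0; 0]; [:: 0; 28; 14; 0; 0; 0; 0]]; [:: [:: 0; 0; 14; 7; 1; 0; 0]; [:: 0; 0; 12; 14; 7; 0; 0]; [:: 0; 0; 12; 6; 0; 0; 0]]]]; [:: [:: [:: [:: 0; 16; 60; 30; 6; 0; 0]; [:: 0; 0; 56; 30; 14; 0; 0]; [:: 0; 48; 60; 28; 0; 0; 0]]; [:: [:: 0; 24; 30; 14; 0; 0; 0];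 [:: 0; 0; 60; 30; 0; 0; 0]; [:: 0; 56; 28; 4; 0; 0; 0]]; [:: [:: 0; 0; 28; 14; 6; 0; 0]; [:: 0; 0; 16; 30; 14; 0; 0]; [:: 0; 0; 28; 14; 0; 0; 0]]]; [:: [:: [:: 0; 24; 30; 14; 0; 0; 0]; [:: 0; 0; 60; 30; 0; 0; 0]; [:: 0; 56; 28; 4; 0; 0; 0]]; [:: [:: 0; 28; 30; 0; 0; 0; 0]; [:: 0; 16; 30; 6; 0; 0; 0]; [:: 0; 60; 14; 0; 0; 0; 0]]; [:: [:: 0; 0; 30; 15; 0; 0; 0]; [:: 0; 0; 28; 14; 0; 0; 0]; [:: 0; 16; 28; 6; 0; 0; 0]]]; [:: [:: [:: 0; 0; 28; 14; 6; 0; 0]; [:: 0; 0; 16; 30; 14; 0; 0]; [:: 0; 0; 28; 14; 0; 0; 0]]; [:: [:: 0; 0; 30; 15; 0; 0; 0]; [:: 0; 0; 28; 14; 0; 0; 0]; [:: 0; 16; 28; 6; 0; 0; 0]]; [:: [:: 0; 0; 12; 14; 7; 0; 0]; [:: 0; 0; 0; 12; 7; 0; 0]; [:: 0; 0; 8; 14; 0; 0; 0]]]]; [:: [:: [:: [:: 0; 56; 28; 12; 0; 0; 0]; [:: 0; 48; 60; 28; 0; 0; 0]; [:: 0; 56; 28; 0; 0; 0; 0]]; [:: [:: 16; 60; 30; 0; 0; 0; 0]; [:: 0; 56; 28; 4; 0; 0; 0]; [:: 48; 56; 12; 0; 0; 0; 0]]; [:: [:: 0; 24; 28; 14; 0;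 0; 0]; [:: 0; 0; 28; 14; 0; 0; 0]; [:: 0; 24; 28; 4; 0; 0; 0]]]; [:: [:: [:: 16; 60; 30; 0; 0; 0; 0]; [:: 0; 56; 28; 4; 0; 0; 0]; [:: 48; 56; 12; 0; 0; 0; 0]]; [:: [:: 24; 28; 6; 0; 0; 0; 0]; [:: 0; 60; 14; 0; 0; 0; 0]; [:: 56; 28; 0; 0; 0; 0; 0]]; [:: [:: 0; 28; 14; 0; 0; 0; 0]; [:: 0; 16; 28; 6; 0; 0; 0]; [:: 0; 24; 12; 0; 0; 0; 0]]]; [:: [:: [:: 0; 24; 28; 14; 0; 0; 0]; [:: 0; 0; 28; 14; 0; 0; 0]; [:: 0; 24; 28; 4; 0; 0; 0]]; [:: [:: 0; 28; 14; 0; 0; 0; 0]; [:: 0; 16; 28; 6; 0; 0; 0]; [:: 0; 24; 12; 0; 0; 0; 0]]; [:: [:: 0; 0; 12; 6; 0; 0; 0]; [:: 0; 0; 8; 14; 0; 0; 0]; [:: 0; 0; 12; 4; 0; 0; 0]]]]]; [:: [:: [:: [:: [:: 0; 24; 62; 30; 6; 0; 0]; [:: 0; 0; 60; 30; 14; 0; 0]; [:: 0; 56; 60; 28; 0; 0; 0]]; [:: [:: 0; 28; 30; 14; 0; 0; 0]; [:: 0; 16; 60; 30; 0; 0; 0]; [:: 0; 56; 28; 4; 0; 0; 0]]; [:: [:: 0; 0; 28; 14; 6; 0; 0]; [:: 0; 0; 24; 30; 14; 0; 0]; [:: 0; 16; 28; 14; 0; 0; 0]]]; [:: [:: [:: 0;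 28; 30; 14; 0; 0; 0]; [:: 0; 16; 60; 30; 0; 0; 0]; [:: 0; 56; 28; 4; 0; 0; 0]]; [:: [:: 16; 28; 30; 0; 0; 0; 0]; [:: 0; 24; 30; 6; 0; 0; 0]; [:: 16; 60; 14; 0; 0; 0; 0]]; [:: [:: 0; 8; 30; 15; 0; 0; 0]; [:: 0; 0; 28; 14; 0; 0; 0]; [:: 0; 24; 28; 6; 0; 0; 0]]]; [:: [:: [:: 0; 0; 28; 14; 6; 0; 0]; [:: 0; 0; 24; 30; 14; 0; 0]; [:: 0; 16; 28; 14; 0; 0; 0]]; [:: [:: 0; 8; 30; 15; 0; 0; 0]; [:: 0; 0; 28; 14; 0; 0; 0]; [:: 0; 24; 28; 6; 0; 0; 0]]; [:: [:: 0; 0; 12; 14; 7; 0; 0]; [:: 0; 0; 0; 14; 7; 0; 0]; [:: 0; 0; 12; 14; 0; 0; 0]]]]; [:: [:: [:: [:: 0; 0; 60; 30; 14; 0; 0]; [:: 0; 0; 48; 60; 30; 0; 0]; [:: 0; 0; 56; 28; 4; 0; 0]]; [:: [:: 0; 16; 60; 30; 0; 0; 0]; [:: 0; 0; 56; 30; 6; 0; 0]; [:: 0; 48; 60; 12; 0; 0; 0]]; [:: [:: 0; 0; 24; 30; 14; 0; 0]; [:: 0; 0; 0; 28; 14; 0; 0]; [:: 0; 0; 24; 28; 4; 0; 0]]]; [:: [:: [:: 0; 16; 60; 30; 0; 0; 0]; [:: 0; 0; 56; 30; 6; 0; 0]; [:: 0; 48; 60; 12; 0; 0; 0]]; [:: [::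 0; 24; 30; 6; 0; 0; 0]; [:: 0; 0; 60; 14; 0; 0; 0]; [:: 0; 56; 28; 0; 0; 0; 0]]; [:: [:: 0; 0; 28; 14; 0; 0; 0]; [:: 0; 0; 16; 30; 6; 0; 0]; [:: 0; 0; 28; 14; 0; 0; 0]]]; [:: [:: [:: 0; 0; 24; 30; 14; 0; 0]; [:: 0; 0; 0; 28; 14; 0; 0]; [:: 0; 0; 24; 28; 4; 0; 0]]; [:: [:: 0; 0; 28; 14; 0; 0; 0]; [:: 0; 0; 16; 30; 6; 0; 0]; [:: 0; 0; 28; 14; 0; 0; 0]]; [:: [:: 0; 0; 0; 14; 7; 0; 0]; [:: 0; 0; 0; 12; 14; 0; 0]; [:: 0; 0; 0; 12; 6; 0; 0]]]]; [:: [:: [:: [:: 0; 56; 60; 28; 0; 0; 0]; [:: 0; 0; 56; 28; 4; 0; 0]; [:: 0; 48; 56; 8; 0; 0; 0]]; [:: [:: 0; 56; 28; 4; 0; 0; 0]; [:: 0; 48; 60; 12; 0; 0; 0]; [:: 0; 56; 28; 0; 0; 0; 0]]; [:: [:: 0; 16; 28; 14; 0; 0; 0]; [:: 0; 0; 24; 28; 4; 0; 0]; [:: 0; 16; 24; 12; 0; 0; 0]]]; [:: [:: [:: 0; 56; 28; 4; 0; 0; 0]; [:: 0; 48; 60; 12; 0; 0; 0]; [:: 0; 56; 28; 0; 0; 0; 0]]; [:: [:: 16; 60; 14; 0; 0; 0; 0]; [:: 0; 56; 28; 0; 0; 0; 0]; [:: 48; 24; 4; 0; 0; 0; 0]]; [::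 [:: 0; 24; 28; 6; 0; 0; 0]; [:: 0; 0; 28; 14; 0; 0; 0]; [:: 0; 24; 12; 0; 0; 0; 0]]]; [:: [:: [:: 0; 16; 28; 14; 0; 0; 0]; [:: 0; 0; 24; 28; 4; 0; 0]; [:: 0; 16; 24; 12; 0; 0; 0]]; [:: [:: 0; 24; 28; 6; 0; 0; 0]; [:: 0; 0; 28; 14; 0; 0; 0]; [:: 0; 24; 12; 0; 0; 0; 0]]; [:: [:: 0; 0; 12; 14; 0; 0; 0]; [:: 0; 0; 0; 12; 6; 0; 0]; [:: 0; 0; 8; 4; 0; 0; 0]]]]]; [:: [:: [:: [:: [:: 0; 16; 60; 30; 14; 0; 0]; [:: 0; 0; 56; 62; 30; 0; 0]; [:: 0; 48; 60; 28; 4; 0; 0]]; [:: [:: 0; 24; 62; 30; 0; 0; 0]; [:: 0; 0; 60; 30; 6; 0; 0]; [:: 0; 56; 60; 12; 0; 0; 0]]; [:: [:: 0; 0; 28; 30; 14; 0; 0]; [:: 0; 0; 16; 28; 14; 0; 0]; [:: 0; 0; 24; 28; 4; 0; 0]]]; [:: [:: [:: 0; 24; 62; 30; 0; 0; 0]; [:: 0; 0; 60; 30; 6; 0; 0]; [:: 0; 56; 60; 12; 0; 0; 0]]; [:: [:: 0; 28; 30; 6; 0; 0; 0]; [:: 0; 16; 60; 14; 0; 0; 0]; [:: 0; 56; 28; 0; 0; 0; 0]]; [:: [:: 0; 0; 28; 14; 0; 0; 0]; [:: 0; 0; 24; 30; 6; 0; 0]; [:: 0; 16; 28; 14; 0;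 0; 0]]]; [:: [:: [:: 0; 0; 28; 30; 14; 0; 0]; [:: 0; 0; 16; 28; 14; 0; 0]; [:: 0; 0; 24; 28; 4; 0; 0]]; [:: [:: 0; 0; 28; 14; 0; 0; 0]; [:: 0; 0; 24; 30; 6; 0; 0]; [:: 0; 16; 28; 14; 0; 0; 0]]; [:: [:: 0; 0; 8; 14; 7; 0; 0]; [:: 0; 0; 0; 12; 14; 0; 0]; [:: 0; 0; 8; 12; 6; 0; 0]]]]; [:: [:: [:: [:: 0; 0; 56; 62; 30; 0; 0]; [:: 0; 0; 0; 60; 30; 4; 0]; [:: 0; 0; 56; 60; 12; 0; 0]]; [:: [:: 0; 0; 60; 30; 6; 0; 0]; [:: 0; 0; 48; 60; 14; 0; 0]; [:: 0; 0; 56; 28; 0; 0; 0]]; [:: [:: 0; 0; 16; 28; 14; 0; 0]; [:: 0; 0; 0; 24; 30; 6; 0]; [:: 0; 0; 16; 28; 12; 0; 0]]]; [:: [:: [:: 0; 0; 60; 30; 6; 0; 0]; [:: 0; 0; 48; 60; 14; 0; 0]; [:: 0; 0; 56; 28; 0; 0; 0]]; [:: [:: 0; 16; 60; 14; 0; 0; 0]; [:: 0; 0; 56; 30; 0; 0; 0]; [:: 0; 48; 28; 4; 0; 0; 0]]; [:: [:: 0; 0; 24; 30; 6; 0; 0]; [:: 0; 0; 0; 28; 14; 0; 0]; [:: 0; 0; 24; 12; 0; 0; 0]]]; [:: [:: [:: 0; 0; 16; 28; 14; 0; 0]; [:: 0; 0; 0; 24; 30; 6; 0]; [:: 0; 0;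 16; 28; 12; 0; 0]]; [:: [:: 0; 0; 24; 30; 6; 0; 0]; [:: 0; 0; 0; 28; 14; 0; 0]; [:: 0; 0; 24; 12; 0; 0; 0]]; [:: [:: 0; 0; 0; 12; 14; 0; 0]; [:: 0; 0; 0; 0; 14; 6; 0]; [:: 0; 0; 0; 12; 6; 0; 0]]]]; [:: [:: [:: [:: 0; 48; 60; 28; 4; 0; 0]; [:: 0; 0; 56; 60; 12; 0; 0]; [:: 0; 48; 56; 24; 0; 0; 0]]; [:: [:: 0; 56; 60; 12; 0; 0; 0]; [:: 0; 0; 56; 28; 0; 0; 0]; [:: 0; 48; 24; 0; 0; 0; 0]]; [:: [:: 0; 0; 24; 28; 4; 0; 0]; [:: 0; 0; 16; 28; 12; 0; 0]; [:: 0; 0; 24; 12; 0; 0; 0]]]; [:: [:: [:: 0; 56; 60; 12; 0; 0; 0]; [:: 0; 0; 56; 28; 0; 0; 0]; [:: 0; 48; 24; 0; 0; 0; 0]]; [:: [:: 0; 56; 28; 0; 0; 0; 0]; [:: 0; 48; 28; 4; 0; 0; 0]; [:: 0; 56; 12; 0; 0; 0; 0]]; [:: [:: 0; 16; 28; 14; 0; 0; 0]; [:: 0; 0; 24; 12; 0; 0; 0]; [:: 0; 16; 24; 4; 0; 0; 0]]]; [:: [:: [:: 0; 0; 24; 28; 4; 0; 0]; [:: 0; 0; 16; 28; 12; 0; 0]; [:: 0; 0; 24; 12; 0; 0; 0]]; [:: [:: 0; 16; 28; 14; 0; 0; 0]; [:: 0; 0; 24; 12; 0; 0; 0]; [:: 0;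 16; 24; 4; 0; 0; 0]]; [:: [:: 0; 0; 8; 12; 6; 0; 0]; [:: 0; 0; 0; 12; 6; 0; 0]; [:: 0; 0; 24; 12; 0; 0; 0]]]]]; [:: [:: [:: [:: [:: 0; 0; 60; 62; 30; 0; 0]; [:: 0; 0; 48; 60; 30; 4; 0]; [:: 0; 0; 56; 60; 12; 0; 0]]; [:: [:: 0; 16; 60; 30; 6; 0; 0]; [:: 0; 0; 56; 62; 14; 0; 0]; [:: 0; 48; 60; 28; 0; 0; 0]]; [:: [:: 0; 0; 24; 30; 14; 0; 0]; [:: 0; 0; 0; 28; 30; 6; 0]; [:: 0; 0; 24; 28; 12; 0; 0]]]; [:: [:: [:: 0; 16; 60; 30; 6; 0; 0]; [:: 0; 0; 56; 62; 14; 0; 0]; [:: 0; 48; 60; 28; 0; 0; 0]]; [:: [:: 0; 24; 62; 14; 0; 0; 0]; [:: 0; 0; 60; 30; 0; 0; 0]; [:: 0; 56; 28; 4; 0; 0; 0]]; [:: [:: 0; 0; 28; 30; 6; 0; 0]; [:: 0; 0; 16; 28; 14; 0; 0]; [:: 0; 0; 24; 12; 0; 0; 0]]]; [:: [:: [:: 0; 0; 24; 30; 14; 0; 0]; [:: 0; 0; 0; 28; 30; 6; 0]; [:: 0; 0; 24; 28; 12; 0; 0]]; [:: [:: 0; 0; 28; 30; 6; 0; 0]; [:: 0; 0; 16; 28; 14; 0; 0]; [:: 0; 0; 24; 12; 0; 0; 0]]; [:: [:: 0; 0; 0; 12; 14; 0; 0]; [:: 0; 0; 0; 8; 14; 6;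 0]; [:: 0; 0; 0; 12; 6; 0; 0]]]]; [:: [:: [:: [:: 0; 0; 48; 60; 30; 4; 0]; [:: 0; 0; 0; 56; 62; 12; 0]; [:: 0; 0; 48; 60; 28; 0; 0]]; [:: [:: 0; 0; 56; 62; 14; 0; 0]; [:: 0; 0; 0; 60; 30; 0; 0]; [:: 0; 0; 56; 28; 4; 0; 0]]; [:: [:: 0; 0; 0; 28; 30; 6; 0]; [:: 0; 0; 0; 16; 28; 14; 0]; [:: 0; 0; 0; 24; 12; 0; 0]]]; [:: [:: [:: 0; 0; 56; 62; 14; 0; 0]; [:: 0; 0; 0; 60; 30; 0; 0]; [:: 0; 0; 56; 28; 4; 0; 0]]; [:: [:: 0; 0; 60; 30; 0; 0; 0]; [:: 0; 0; 48; 28; 6; 0; 0]; [:: 0; 0; 56; 12; 0; 0; 0]]; [:: [:: 0; 0; 16; 28; 14; 0; 0]; [:: 0; 0; 0; 24; 14; 0; 0]; [:: 0; 0; 16; 28; 4; 0; 0]]]; [:: [:: [:: 0; 0; 0; 28; 30; 6; 0]; [:: 0; 0; 0; 16; 28; 14; 0]; [:: 0; 0; 0; 24; 12; 0; 0]]; [:: [:: 0; 0; 16; 28; 14; 0; 0]; [:: 0; 0; 0; 24; 14; 0; 0]; [:: 0; 0; 16; 28; 4; 0; 0]]; [:: [:: 0; 0; 0; 8; 14; 6; 0]; [:: 0; 0; 0; 0; 12; 6; 0]; [:: 0; 0; 0; 24; 12; 0; 0]]]]; [:: [:: [:: [:: 0; 0; 56; 60; 12; 0; 0]; [:: 0; 0;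 48; 60; 28; 0; 0]; [:: 0; 0; 56; 24; 0; 0; 0]]; [:: [:: 0; 48; 60; 28; 0; 0; 0]; [:: 0; 0; 56; 28; 4; 0; 0]; [:: 0; 48; 56; 8; 0; 0; 0]]; [:: [:: 0; 0; 24; 28; 12; 0; 0]; [:: 0; 0; 0; 24; 12; 0; 0]; [:: 0; 0; 48; 24; 0; 0; 0]]]; [:: [:: [:: 0; 48; 60; 28; 0; 0; 0]; [:: 0; 0; 56; 28; 4; 0; 0]; [:: 0; 48; 56; 8; 0; 0; 0]]; [:: [:: 0; 56; 28; 4; 0; 0; 0]; [:: 0; 0; 56; 12; 0; 0; 0]; [:: 0; 48; 24; 0; 0; 0; 0]]; [:: [:: 0; 0; 24; 12; 0; 0; 0]; [:: 0; 0; 16; 28; 4; 0; 0]; [:: 0; 0; 24; 12; 0; 0; 0]]]; [:: [:: [:: 0; 0; 24; 28; 12; 0; 0]; [:: 0; 0; 0; 24; 12; 0; 0]; [:: 0; 0; 48; 24; 0; 0; 0]]; [:: [:: 0; 0; 24; 12; 0; 0; 0]; [:: 0; 0; 16; 28; 4; 0; 0]; [:: 0; 0; 24; 12; 0; 0; 0]]; [:: [:: 0; 0; 0; 12; 6; 0; 0]; [:: 0; 0; 0; 24; 12; 0; 0]; [:: 0; 0; 16; 8; 4; 0; 0]]]]]; [:: [:: [:: [:: [:: 0; 0; 56; 60; 30; 4; 0]; [:: 0; 0; 0; 60; 62; 12; 0]; [:: 0; 0; 56; 60; 28; 0; 0]]; [:: [:: 0; 0; 60; 62; 14; 0; 0];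 [:: 0; 0; 48; 60; 30; 0; 0]; [:: 0; 0; 56; 28; 4; 0; 0]]; [:: [:: 0; 0; 16; 28; 30; 6; 0]; [:: 0; 0; 0; 24; 30; 14; 0]; [:: 0; 0; 16; 28; 12; 0; 0]]]; [:: [:: [:: 0; 0; 60; 62; 14; 0; 0]; [:: 0; 0; 48; 60; 30; 0; 0]; [:: 0; 0; 56; 28; 4; 0; 0]]; [:: [:: 0; 16; 60; 30; 0; 0; 0]; [:: 0; 0; 56; 30; 6; 0; 0]; [:: 0; 48; 60; 12; 0; 0; 0]]; [:: [:: 0; 0; 24; 30; 14; 0; 0]; [:: 0; 0; 0; 28; 14; 0; 0]; [:: 0; 0; 24; 28; 4; 0; 0]]]; [:: [:: [:: 0; 0; 16; 28; 30; 6; 0]; [:: 0; 0; 0; 24; 30; 14; 0]; [:: 0; 0; 16; 28; 12; 0; 0]]; [:: [:: 0; 0; 24; 30; 14; 0; 0]; [:: 0; 0; 0; 28; 14; 0; 0]; [:: 0; 0; 24; 28; 4; 0; 0]]; [:: [:: 0; 0; 0; 12; 14; 6; 0]; [:: 0; 0; 0; 0; 12; 6; 0]; [:: 0; 0; 0; 24; 12; 0; 0]]]]; [:: [:: [:: [:: 0; 0; 0; 60; 62; 12; 0]; [:: 0; 0; 0; 48; 60; 28; 0]; [:: 0; 0; 0; 56; 28; 0; 0]]; [:: [:: 0; 0; 48; 60; 30; 0; 0]; [:: 0; 0; 0; 56; 30; 4; 0]; [:: 0; 0; 48; 60; 12; 0; 0]]; [:: [:: 0; 0; 0; 24; 30;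 14; 0]; [:: 0; 0; 0; 0; 28; 14; 0]; [:: 0; 0; 0; 56; 28; 4; 0]]]; [:: [:: [:: 0; 0; 48; 60; 30; 0; 0]; [:: 0; 0; 0; 56; 30; 4; 0]; [:: 0; 0; 48; 60; 12; 0; 0]]; [:: [:: 0; 0; 56; 30; 6; 0; 0]; [:: 0; 0; 0; 60; 14; 0; 0]; [:: 0; 0; 56; 28; 0; 0; 0]]; [:: [:: 0; 0; 0; 28; 14; 0; 0]; [:: 0; 0; 0; 16; 28; 6; 0]; [:: 0; 0; 0; 24; 12; 0; 0]]]; [:: [:: [:: 0; 0; 0; 24; 30; 14; 0]; [:: 0; 0; 0; 0; 28; 14; 0]; [:: 0; 0; 0; 56; 28; 4; 0]]; [:: [:: 0; 0; 0; 28; 14; 0; 0]; [:: 0; 0; 0; 16; 28; 6; 0]; [:: 0; 0; 0; 24; 12; 0; 0]]; [:: [:: 0; 0; 0; 0; 12; 6; 0]; [:: 0; 0; 0; 0; 24; 14; 0]; [:: 0; 0; 0; 16; 12; 4; 0]]]]; [:: [:: [:: [:: 0; 0; 56; 60; 28; 0; 0]; [:: 0; 0; 0; 56; 28; 0; 0]; [:: 0; 0; 112; 56; 8; 0; 0]]; [:: [:: 0; 0; 56; 28; 4; 0; 0]; [:: 0; 0; 48; 60; 12; 0; 0]; [:: 0; 0; 56; 24; 0; 0; 0]]; [:: [:: 0; 0; 16; 28; 12; 0; 0]; [:: 0; 0; 0; 56; 28; 4; 0]; [:: 0; 0; 48; 24; 8; 0; 0]]]; [:: [:: [:: 0; 0;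 56; 28; 4; 0; 0]; [:: 0; 0; 48; 60; 12; 0; 0]; [:: 0; 0; 56; 24; 0; 0; 0]]; [:: [:: 0; 48; 60; 12; 0; 0; 0]; [:: 0; 0; 56; 28; 0; 0; 0]; [:: 0; 48; 56; 0; 0; 0; 0]]; [:: [:: 0; 0; 24; 28; 4; 0; 0]; [:: 0; 0; 0; 24; 12; 0; 0]; [:: 0; 0; 48; 24; 0; 0; 0]]]; [:: [:: [:: 0; 0; 16; 28; 12; 0; 0]; [:: 0; 0; 0; 56; 28; 4; 0]; [:: 0; 0; 48; 24; 8; 0; 0]]; [:: [:: 0; 0; 24; 28; 4; 0; 0]; [:: 0; 0; 0; 24; 12; 0; 0]; [:: 0; 0; 48; 24; 0; 0; 0]]; [:: [:: 0; 0; 0; 24; 12; 0; 0]; [:: 0; 0; 0; 16; 12; 4; 0]; [:: 0; 0; 0; 24; 12; 0; 0]]]]]; [:: [:: [:: [:: [:: 0; 0; 48; 60; 62; 12; 0]; [:: 0; 0; 0; 56; 60; 28; 0]; [:: 0; 0; 48; 56; 28; 0; 0]]; [:: [:: 0; 0; 56; 60; 30; 0; 0]; [:: 0; 0; 0; 60; 30; 4; 0]; [:: 0; 0; 56; 60; 12; 0; 0]]; [:: [:: 0; 0; 0; 28; 30; 14; 0]; [:: 0; 0; 0; 16; 28; 14; 0]; [:: 0; 0; 0; 56; 28; 4; 0]]]; [:: [:: [:: 0; 0; 56; 60; 30; 0; 0]; [:: 0; 0; 0; 60; 30; 4; 0]; [:: 0; 0; 56; 60; 12; 0; 0]]; [::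 [:: 0; 0; 60; 30; 6; 0; 0]; [:: 0; 0; 48; 60; 14; 0; 0]; [:: 0; 0; 56; 28; 0; 0; 0]]; [:: [:: 0; 0; 16; 28; 14; 0; 0]; [:: 0; 0; 0; 24; 30; 6; 0]; [:: 0; 0; 16; 28; 12; 0; 0]]]; [:: [:: [:: 0; 0; 0; 28; 30; 14; 0]; [:: 0; 0; 0; 16; 28; 14; 0]; [:: 0; 0; 0; 56; 28; 4; 0]]; [:: [:: 0; 0; 16; 28; 14; 0; 0]; [:: 0; 0; 0; 24; 30; 6; 0]; [:: 0; 0; 16; 28; 12; 0; 0]]; [:: [:: 0; 0; 0; 8; 14; 6; 0]; [:: 0; 0; 0; 0; 28; 14; 0]; [:: 0; 0; 0; 24; 12; 4; 0]]]]; [:: [:: [:: [:: 0; 0; 0; 56; 60; 28; 0]; [:: 0; 0; 0; 0; 60; 28; 4]; [:: 0; 0; 0; 120; 60; 8; 0]]; [:: [:: 0; 0; 0; 60; 30; 4; 0]; [:: 0; 0; 0; 48; 60; 12; 0]; [:: 0; 0; 0; 56; 28; 0; 0]]; [:: [:: 0; 0; 0; 16; 28; 14; 0]; [:: 0; 0; 0; 0; 56; 30; 4]; [:: 0; 0; 0; 48; 28; 12; 0]]]; [:: [:: [:: 0; 0; 0; 60; 30; 4; 0]; [:: 0; 0; 0; 48; 60; 12; 0]; [:: 0; 0; 0; 56; 28; 0; 0]]; [:: [:: 0; 0; 48; 60; 14; 0; 0]; [:: 0; 0; 0; 56; 30; 0; 0]; [:: 0; 0; 48; 60; 4; 0; 0]];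 [:: [:: 0; 0; 0; 24; 30; 6; 0]; [:: 0; 0; 0; 0; 28; 14; 0]; [:: 0; 0; 0; 56; 28; 0; 0]]]; [:: [:: [:: 0; 0; 0; 16; 28; 14; 0]; [:: 0; 0; 0; 0; 56; 30; 4]; [:: 0; 0; 0; 48; 28; 12; 0]]; [:: [:: 0; 0; 0; 24; 30; 6; 0]; [:: 0; 0; 0; 0; 28; 14; 0]; [:: 0; 0; 0; 56; 28; 0; 0]]; [:: [:: 0; 0; 0; 0; 28; 14; 0]; [:: 0; 0; 0; 0; 16; 12; 6]; [:: 0; 0; 0; 0; 24; 12; 0]]]]; [:: [:: [:: [:: 0; 0; 48; 56; 28; 0; 0]; [:: 0; 0; 0; 120; 60; 8; 0]; [:: 0; 0; 112; 56; 24; 0; 0]]; [:: [:: 0; 0; 56; 60; 12; 0; 0]; [:: 0; 0; 0; 56; 28; 0; 0]; [:: 0; 0; 112; 56; 0; 0; 0]]; [:: [:: 0; 0; 0; 56; 28; 4; 0]; [:: 0; 0; 0; 48; 28; 12; 0]; [:: 0; 0; 0; 56; 24; 0; 0]]]; [:: [:: [:: 0; 0; 56; 60; 12; 0; 0]; [:: 0; 0; 0; 56; 28; 0; 0]; [:: 0; 0; 112; 56; 0; 0; 0]]; [:: [:: 0; 0; 56; 28; 0; 0; 0]; [:: 0; 0; 48; 60; 4; 0; 0]; [:: 0; 0; 56; 24; 0; 0; 0]]; [:: [:: 0; 0; 16; 28; 12; 0; 0]; [:: 0; 0; 0; 56; 28; 0; 0]; [:: 0; 0; 48; 24; 0; 0;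 0]]]; [:: [:: [:: 0; 0; 0; 56; 28; 4; 0]; [:: 0; 0; 0; 48; 28; 12; 0]; [:: 0; 0; 0; 56; 24; 0; 0]]; [:: [:: 0; 0; 16; 28; 12; 0; 0]; [:: 0; 0; 0; 56; 28; 0; 0]; [:: 0; 0; 48; 24; 0; 0; 0]]; [:: [:: 0; 0; 0; 24; 12; 4; 0]; [:: 0; 0; 0; 0; 24; 12; 0]; [:: 0; 0; 0; 16; 8; 0; 0]]]]]; [:: [:: [:: [:: [:: 0; 0; 0; 56; 60; 28; 0]; [:: 0; 0; 0; 48; 60; 28; 4]; [:: 0; 0; 0; 120; 60; 8; 0]]; [:: [:: 0; 0; 48; 60; 30; 4; 0]; [:: 0; 0; 0; 56; 60; 12; 0]; [:: 0; 0; 48; 56; 28; 0; 0]]; [:: [:: 0; 0; 0; 24; 28; 14; 0]; [:: 0; 0; 0; 0; 60; 30; 4]; [:: 0; 0; 0; 56; 28; 12; 0]]]; [:: [:: [:: 0; 0; 48; 60; 30; 4; 0]; [:: 0; 0; 0; 56; 60; 12; 0]; [:: 0; 0; 48; 56; 28; 0; 0]]; [:: [:: 0; 0; 56; 60; 14; 0; 0]; [:: 0; 0; 0; 60; 30; 0; 0]; [:: 0; 0; 56; 60; 4; 0; 0]]; [:: [:: 0; 0; 0; 28; 30; 6; 0]; [:: 0; 0; 0; 16; 28; 14; 0]; [:: 0; 0; 0; 56; 28; 0; 0]]]; [:: [:: [:: 0; 0; 0; 24; 28; 14; 0]; [:: 0; 0; 0; 0; 60; 30; 4]; [:: 0; 0;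 0; 56; 28; 12; 0]]; [:: [:: 0; 0; 0; 28; 30; 6; 0]; [:: 0; 0; 0; 16; 28; 14; 0]; [:: 0; 0; 0; 56; 28; 0; 0]]; [:: [:: 0; 0; 0; 0; 28; 14; 0]; [:: 0; 0; 0; 0; 24; 14; 6]; [:: 0; 0; 0; 16; 28; 12; 0]]]]; [:: [:: [:: [:: 0; 0; 0; 48; 60; 28; 4]; [:: 0; 0; 0; 0; 120; 60; 12]; [:: 0; 0; 0; 112; 56; 24; 0]]; [:: [:: 0; 0; 0; 56; 60; 12; 0]; [:: 0; 0; 0; 0; 60; 28; 0]; [:: 0; 0; 0; 120; 60; 0; 0]]; [:: [:: 0; 0; 0; 0; 60; 30; 4]; [:: 0; 0; 0; 0; 48; 28; 12]; [:: 0; 0; 0; 0; 56; 28; 0]]]; [:: [:: [:: 0; 0; 0; 56; 60; 12; 0]; [:: 0; 0; 0; 0; 60; 28; 0]; [:: 0; 0; 0; 120; 60; 0; 0]]; [:: [:: 0; 0; 0; 60; 30; 0; 0]; [:: 0; 0; 0; 48; 60; 4; 0]; [:: 0; 0; 0; 56; 28; 0; 0]]; [:: [:: 0; 0; 0; 16; 28; 14; 0]; [:: 0; 0; 0; 0; 56; 30; 0]; [:: 0; 0; 0; 48; 28; 4; 0]]]; [:: [:: [:: 0; 0; 0; 0; 60; 30; 4]; [:: 0; 0; 0; 0; 48; 28; 12]; [:: 0; 0; 0; 0; 56; 28; 0]]; [:: [:: 0; 0; 0; 16; 28; 14; 0]; [:: 0; 0; 0; 0; 56; 30; 0]; [:: 0;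 0; 0; 48; 28; 4; 0]]; [:: [:: 0; 0; 0; 0; 24; 14; 6]; [:: 0; 0; 0; 0; 0; 28; 14]; [:: 0; 0; 0; 0; 24; 12; 0]]]]; [:: [:: [:: [:: 0; 0; 0; 120; 60; 8; 0]; [:: 0; 0; 0; 112; 56; 24; 0]; [:: 0; 0; 64; 112; 56; 0; 0]]; [:: [:: 0; 0; 48; 56; 28; 0; 0]; [:: 0; 0; 0; 120; 60; 0; 0]; [:: 0; 0; 112; 56; 24; 0; 0]]; [:: [:: 0; 0; 0; 56; 28; 12; 0]; [:: 0; 0; 0; 0; 56; 28; 0]; [:: 0; 0; 0; 48; 24; 0; 0]]]; [:: [:: [:: 0; 0; 48; 56; 28; 0; 0]; [:: 0; 0; 0; 120; 60; 0; 0]; [:: 0; 0; 112; 56; 24; 0; 0]]; [:: [:: 0; 0; 56; 60; 4; 0; 0]; [:: 0; 0; 0; 56; 28; 0; 0]; [:: 0; 0; 112; 24; 0; 0; 0]]; [:: [:: 0; 0; 0; 56; 28; 0; 0]; [:: 0; 0; 0; 48; 28; 4; 0]; [:: 0; 0; 0; 56; 8; 0; 0]]]; [:: [:: [:: 0; 0; 0; 56; 28; 12; 0]; [:: 0; 0; 0; 0; 56; 28; 0]; [:: 0; 0; 0; 48; 24; 0; 0]]; [:: [:: 0; 0; 0; 56; 28; 0; 0]; [:: 0; 0; 0; 48; 28; 4; 0]; [:: 0; 0; 0; 56; 8; 0; 0]]; [:: [:: 0; 0; 0; 16; 28; 12; 0]; [:: 0; 0; 0; 0; 24; 12; 0]; [::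 0; 0; 0; 16; 24; 0; 0]]]]]; [:: [:: [:: [:: [:: 0; 0; 0; 56; 60; 28; 4]; [:: 0; 0; 0; 0; 120; 60; 12]; [:: 0; 0; 0; 112; 56; 24; 0]]; [:: [:: 0; 0; 0; 56; 60; 12; 0]; [:: 0; 0; 0; 48; 60; 28; 0]; [:: 0; 0; 0; 120; 60; 0; 0]]; [:: [:: 0; 0; 0; 16; 60; 30; 4]; [:: 0; 0; 0; 0; 56; 28; 12]; [:: 0; 0; 0; 48; 56; 28; 0]]]; [:: [:: [:: 0; 0; 0; 56; 60; 12; 0]; [:: 0; 0; 0; 48; 60; 28; 0]; [:: 0; 0; 0; 120; 60; 0; 0]]; [:: [:: 0; 0; 48; 60; 30; 0; 0]; [:: 0; 0; 0; 56; 60; 4; 0]; [:: 0; 0; 48; 56; 28; 0; 0]]; [:: [:: 0; 0; 0; 24; 28; 14; 0]; [:: 0; 0; 0; 0; 60; 30; 0]; [:: 0; 0; 0; 56; 28; 4; 0]]]; [:: [:: [:: 0; 0; 0; 16; 60; 30; 4]; [:: 0; 0; 0; 0; 56; 28; 12]; [:: 0; 0; 0; 48; 56; 28; 0]]; [:: [:: 0; 0; 0; 24; 28; 14; 0]; [:: 0; 0; 0; 0; 60; 30; 0]; [:: 0; 0; 0; 56; 28; 4; 0]]; [:: [:: 0; 0; 0; 0; 28; 14; 6]; [:: 0; 0; 0; 0; 16; 28; 14]; [:: 0; 0; 0; 0; 24; 12; 0]]]]; [:: [:: [:: [:: 0; 0; 0; 0; 120; 60; 12]; [:: 0; 0; 0;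 0; 112; 60; 28]; [:: 0; 0; 0; 64; 120; 56; 0]]; [:: [:: 0; 0; 0; 48; 60; 28; 0]; [:: 0; 0; 0; 0; 120; 60; 4]; [:: 0; 0; 0; 112; 56; 24; 0]]; [:: [:: 0; 0; 0; 0; 56; 28; 12]; [:: 0; 0; 0; 0; 0; 60; 28]; [:: 0; 0; 0; 0; 56; 28; 0]]]; [:: [:: [:: 0; 0; 0; 48; 60; 28; 0]; [:: 0; 0; 0; 0; 120; 60; 4]; [:: 0; 0; 0; 112; 56; 24; 0]]; [:: [:: 0; 0; 0; 56; 60; 4; 0]; [:: 0; 0; 0; 0; 60; 28; 0]; [:: 0; 0; 0; 120; 28; 0; 0]]; [:: [:: 0; 0; 0; 0; 60; 30; 0]; [:: 0; 0; 0; 0; 48; 28; 4]; [:: 0; 0; 0; 0; 56; 12; 0]]]; [:: [:: [:: 0; 0; 0; 0; 56; 28; 12]; [:: 0; 0; 0; 0; 0; 60; 28]; [:: 0; 0; 0; 0; 56; 28; 0]]; [:: [:: 0; 0; 0; 0; 60; 30; 0]; [:: 0; 0; 0; 0; 48; 28; 4]; [:: 0; 0; 0; 0; 56; 12; 0]]; [:: [:: 0; 0; 0; 0; 16; 28; 14]; [:: 0; 0; 0; 0; 0; 24; 14]; [:: 0; 0; 0; 0; 16; 28; 4]]]]; [:: [:: [:: [:: 0; 0; 0; 112; 56; 24; 0]; [:: 0; 0; 0; 64; 120; 56; 0]; [:: 0; 0; 0; 112; 56; 16; 0]]; [:: [:: 0; 0; 0; 120; 60; 0; 0]; [:: 0;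 0; 0; 112; 56; 24; 0]; [:: 0; 0; 64; 112; 24; 0; 0]]; [:: [:: 0; 0; 0; 48; 56; 28; 0]; [:: 0; 0; 0; 0; 56; 28; 0]; [:: 0; 0; 0; 48; 56; 8; 0]]]; [:: [:: [:: 0; 0; 0; 120; 60; 0; 0]; [:: 0; 0; 0; 112; 56; 24; 0]; [:: 0; 0; 64; 112; 24; 0; 0]]; [:: [:: 0; 0; 48; 56; 28; 0; 0]; [:: 0; 0; 0; 120; 28; 0; 0]; [:: 0; 0; 112; 56; 0; 0; 0]]; [:: [:: 0; 0; 0; 56; 28; 4; 0]; [:: 0; 0; 0; 0; 56; 12; 0]; [:: 0; 0; 0; 48; 24; 0; 0]]]; [:: [:: [:: 0; 0; 0; 48; 56; 28; 0]; [:: 0; 0; 0; 0; 56; 28; 0]; [:: 0; 0; 0; 48; 56; 8; 0]]; [:: [:: 0; 0; 0; 56; 28; 4; 0]; [:: 0; 0; 0; 0; 56; 12; 0]; [:: 0; 0; 0; 48; 24; 0; 0]]; [:: [:: 0; 0; 0; 0; 24; 12; 0]; [:: 0; 0; 0; 0; 16; 28; 4]; [:: 0; 0; 0; 0; 24; 8; 0]]]]]].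

Definition T3 : TT :=
 [:: [:: [:: [:: [:: [:: 0; 28; 62; 62; 62; 0; 0]; [:: 0; 16; 62; 62; 62; 0; 0]; [:: 0; 60; 60; 60; 0; 0; 0]]; [:: [:: 16; 30; 62; 62; 0; 0; 0]; [:: 0; 24; 62; 62; 0; 0; 0]; [:: 16; 60; 60; 0; 0; 0; 0]]; [:: [:: 0; 8; 30; 30; 30; 0; 0]; [:: 0; 0; 28; 30; 30; 0; 0]; [:: 0; 24; 28; 28; 0; 0; 0]]]; [:: [:: [:: 16; 30; 62; 62; 0; 0; 0]; [:: 0; 24; 62; 62; 0; 0; 0]; [:: 16; 60; 60; 0; 0; 0; 0]]; [:: [:: 24; 30; 62; 0; 0; 0; 0]; [:: 0; 28; 62; 0; 0; 0; 0]; [:: 24; 60; 0; 0; 0; 0; 0]]; [:: [:: 0; 12; 30; 30; 0; 0; 0]; [:: 0; 0; 30; 30; 0; 0; 0]; [:: 0; 28; 30; 0; 0; 0; 0]]]; [:: [:: [:: 0; 8; 30; 30; 30; 0; 0]; [:: 0; 0; 28; 30; 30; 0; 0]; [:: 0; 24; 28; 28; 0; 0; 0]]; [:: [:: 0; 12; 30; 30; 0; 0; 0]; [:: 0; 0; 30; 30; 0; 0; 0]; [:: 0; 28; 30; 0; 0; 0; 0]]; [:: [:: 0; 0; 14; 15; 14; 0; 0]; [:: 0; 0; 0; 14; 14; 0; 0]; [:: 0; 0; 12; 14; 0; 0; 0]]]]; [:: [:: [:: [:: 0; 16; 62; 62; 62; 0; 0]; [:: 0; 0; 56; 62; 62; 0;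 0]; [:: 0; 48; 60; 60; 0; 0; 0]]; [:: [:: 0; 24; 62; 62; 0; 0; 0]; [:: 0; 0; 60; 62; 0; 0; 0]; [:: 0; 56; 60; 0; 0; 0; 0]]; [:: [:: 0; 0; 28; 30; 30; 0; 0]; [:: 0; 0; 0; 30; 30; 0; 0]; [:: 0; 0; 28; 28; 0; 0; 0]]]; [:: [:: [:: 0; 24; 62; 62; 0; 0; 0]; [:: 0; 0; 60; 62; 0; 0; 0]; [:: 0; 56; 60; 0; 0; 0; 0]]; [:: [:: 0; 28; 62; 0; 0; 0; 0]; [:: 0; 0; 62; 0; 0; 0; 0]; [:: 0; 60; 4; 0; 0; 0; 0]]; [:: [:: 0; 0; 30; 30; 0; 0; 0]; [:: 0; 0; 16; 30; 0; 0; 0]; [:: 0; 0; 28; 0; 0; 0; 0]]]; [:: [:: [:: 0; 0; 28; 30; 30; 0; 0]; [:: 0; 0; 0; 30; 30; 0; 0]; [:: 0; 0; 28; 28; 0; 0; 0]]; [:: [:: 0; 0; 30; 30; 0; 0; 0]; [:: 0; 0; 16; 30; 0; 0; 0]; [:: 0; 0; 28; 0; 0; 0; 0]]; [:: [:: 0; 0; 0; 14; 14; 0; 0]; [:: 0; 0; 0; 8; 14; 0; 0]; [:: 0; 0; 0; 12; 0; 0; 0]]]]; [:: [:: [:: [:: 0; 60; 60; 60; 0; 0; 0]; [:: 0; 48; 60; 60; 0; 0; 0]; [:: 0; 56; 56; 0; 0; 0; 0]]; [:: [:: 16; 60; 60; 0; 0; 0; 0]; [:: 0; 56; 60; 0;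 0; 0; 0]; [:: 48; 56; 0; 0; 0; 0; 0]]; [:: [:: 0; 24; 28; 28; 0; 0; 0]; [:: 0; 0; 28; 28; 0; 0; 0]; [:: 0; 24; 28; 0; 0; 0; 0]]]; [:: [:: [:: 16; 60; 60; 0; 0; 0; 0]; [:: 0; 56; 60; 0; 0; 0; 0]; [:: 48; 56; 0; 0; 0; 0; 0]]; [:: [:: 24; 60; 0; 0; 0; 0; 0]; [:: 0; 60; 4; 0; 0; 0; 0]; [:: 56; 12; 0; 0; 0; 0; 0]]; [:: [:: 0; 28; 30; 0; 0; 0; 0]; [:: 0; 0; 28; 0; 0; 0; 0]; [:: 0; 24; 4; 0; 0; 0; 0]]]; [:: [:: [:: 0; 24; 28; 28; 0; 0; 0]; [:: 0; 0; 28; 28; 0; 0; 0]; [:: 0; 24; 28; 0; 0; 0; 0]]; [:: [:: 0; 28; 30; 0; 0; 0; 0]; [:: 0; 0; 28; 0; 0; 0; 0]; [:: 0; 24; 4; 0; 0; 0; 0]]; [:: [:: 0; 0; 12; 14; 0; 0; 0]; [:: 0; 0; 0; 12; 0; 0; 0]; [:: 0; 0; 8; 0; 0; 0; 0]]]]]; [:: [:: [:: [:: [:: 0; 28; 62; 62; 62; 0; 0]; [:: 0; 0; 60; 62; 62; 0; 0]; [:: 0; 56; 60; 60; 0; 0; 0]]; [:: [:: 0; 28; 62; 62; 0; 0; 0]; [:: 0; 16; 62; 62; 0; 0; 0]; [:: 0; 60; 60; 0; 0; 0; 0]]; [:: [:: 0; 0; 30; 30; 30; 0; 0]; [:: 0;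 0; 24; 30; 30; 0; 0]; [:: 0; 16; 28; 28; 0; 0; 0]]]; [:: [:: [:: 0; 28; 62; 62; 0; 0; 0]; [:: 0; 16; 62; 62; 0; 0; 0]; [:: 0; 60; 60; 0; 0; 0; 0]]; [:: [:: 16; 30; 62; 0; 0; 0; 0]; [:: 0; 24; 62; 0; 0; 0; 0]; [:: 16; 60; 4; 0; 0; 0; 0]]; [:: [:: 0; 8; 30; 30; 0; 0; 0]; [:: 0; 0; 28; 30; 0; 0; 0]; [:: 0; 24; 28; 0; 0; 0; 0]]]; [:: [:: [:: 0; 0; 30; 30; 30; 0; 0]; [:: 0; 0; 24; 30; 30; 0; 0]; [:: 0; 16; 28; 28; 0; 0; 0]]; [:: [:: 0; 8; 30; 30; 0; 0; 0]; [:: 0; 0; 28; 30; 0; 0; 0]; [:: 0; 24; 28; 0; 0; 0; 0]]; [:: [:: 0; 0; 12; 14; 14; 0; 0]; [:: 0; 0; 0; 14; 14; 0; 0]; [:: 0; 0; 12; 14; 0; 0; 0]]]]; [:: [:: [:: [:: 0; 0; 60; 62; 62; 0; 0]; [:: 0; 0; 48; 62; 62; 0; 0]; [:: 0; 0; 60; 60; 0; 0; 0]]; [:: [:: 0; 16; 62; 62; 0; 0; 0]; [:: 0; 0; 56; 62; 0; 0; 0]; [:: 0; 48; 60; 4; 0; 0; 0]]; [:: [:: 0; 0; 24; 30; 30; 0; 0]; [:: 0; 0; 0; 28; 30; 0; 0]; [:: 0; 0; 24; 28; 0; 0; 0]]]; [:: [:: [:: 0; 16; 62; 62; 0; 0;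 0]; [:: 0; 0; 56; 62; 0; 0; 0]; [:: 0; 48; 60; 4; 0; 0; 0]]; [:: [:: 0; 24; 62; 0; 0; 0; 0]; [:: 0; 0; 60; 6; 0; 0; 0]; [:: 0; 56; 12; 0; 0; 0; 0]]; [:: [:: 0; 0; 28; 30; 0; 0; 0]; [:: 0; 0; 0; 30; 0; 0; 0]; [:: 0; 0; 28; 4; 0; 0; 0]]]; [:: [:: [:: 0; 0; 24; 30; 30; 0; 0]; [:: 0; 0; 0; 28; 30; 0; 0]; [:: 0; 0; 24; 28; 0; 0; 0]]; [:: [:: 0; 0; 28; 30; 0; 0; 0]; [:: 0; 0; 0; 30; 0; 0; 0]; [:: 0; 0; 28; 4; 0; 0; 0]]; [:: [:: 0; 0; 0; 14; 14; 0; 0]; [:: 0; 0; 0; 0; 14; 0; 0]; [:: 0; 0; 0; 12; 0; 0; 0]]]]; [:: [:: [:: [:: 0; 56; 60; 60; 0; 0; 0]; [:: 0; 0; 60; 60; 0; 0; 0]; [:: 0; 56; 56; 0; 0; 0; 0]]; [:: [:: 0; 60; 60; 0; 0; 0; 0]; [:: 0; 48; 60; 4; 0; 0; 0]; [:: 0; 56; 8; 0; 0; 0; 0]]; [:: [:: 0; 16; 28; 28; 0; 0; 0]; [:: 0; 0; 24; 28; 0; 0; 0]; [:: 0; 16; 24; 0; 0; 0; 0]]]; [:: [:: [:: 0; 60; 60; 0; 0; 0; 0]; [:: 0; 48; 60; 4; 0; 0; 0]; [:: 0; 56; 8; 0; 0; 0; 0]]; [:: [:: 16; 60; 4; 0;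 0; 0; 0]; [:: 0; 56; 12; 0; 0; 0; 0]; [:: 48; 24; 0; 0; 0; 0; 0]]; [:: [:: 0; 24; 28; 0; 0; 0; 0]; [:: 0; 0; 28; 4; 0; 0; 0]; [:: 0; 24; 12; 0; 0; 0; 0]]]; [:: [:: [:: 0; 16; 28; 28; 0; 0; 0]; [:: 0; 0; 24; 28; 0; 0; 0]; [:: 0; 16; 24; 0; 0; 0; 0]]; [:: [:: 0; 24; 28; 0; 0; 0; 0]; [:: 0; 0; 28; 4; 0; 0; 0]; [:: 0; 24; 12; 0; 0; 0; 0]]; [:: [:: 0; 0; 12; 14; 0; 0; 0]; [:: 0; 0; 0; 12; 0; 0; 0]; [:: 0; 0; 8; 4; 0; 0; 0]]]]]; [:: [:: [:: [:: [:: 0; 24; 62; 62; 62; 0; 0]; [:: 0; 0; 60; 62; 62; 0; 0]; [:: 0; 56; 60; 60; 0; 0; 0]]; [:: [:: 0; 28; 62; 62; 0; 0; 0]; [:: 0; 0; 60; 62; 0; 0; 0]; [:: 0; 56; 60; 4; 0; 0; 0]]; [:: [:: 0; 0; 28; 30; 30; 0; 0]; [:: 0; 0; 16; 30; 30; 0; 0]; [:: 0; 0; 28; 28; 0; 0; 0]]]; [:: [:: [:: 0; 28; 62; 62; 0; 0; 0]; [:: 0; 0; 60; 62; 0; 0; 0]; [:: 0; 56; 60; 4; 0; 0; 0]]; [:: [:: 0; 28; 62; 0; 0; 0; 0]; [:: 0; 16; 62; 6; 0; 0; 0]; [:: 0; 60; 12; 0; 0; 0; 0]]; [:: [:: 0;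 0; 30; 30; 0; 0; 0]; [:: 0; 0; 24; 30; 0; 0; 0]; [:: 0; 16; 28; 4; 0; 0; 0]]]; [:: [:: [:: 0; 0; 28; 30; 30; 0; 0]; [:: 0; 0; 16; 30; 30; 0; 0]; [:: 0; 0; 28; 28; 0; 0; 0]]; [:: [:: 0; 0; 30; 30; 0; 0; 0]; [:: 0; 0; 24; 30; 0; 0; 0]; [:: 0; 16; 28; 4; 0; 0; 0]]; [:: [:: 0; 0; 8; 14; 14; 0; 0]; [:: 0; 0; 0; 12; 14; 0; 0]; [:: 0; 0; 8; 12; 0; 0; 0]]]]; [:: [:: [:: [:: 0; 0; 60; 62; 62; 0; 0]; [:: 0; 0; 0; 60; 62; 0; 0]; [:: 0; 0; 56; 60; 4; 0; 0]]; [:: [:: 0; 0; 60; 62; 0; 0; 0]; [:: 0; 0; 48; 62; 6; 0; 0]; [:: 0; 0; 60; 12; 0; 0; 0]]; [:: [:: 0; 0; 16; 30; 30; 0; 0]; [:: 0; 0; 0; 24; 30; 0; 0]; [:: 0; 0; 16; 28; 4; 0; 0]]]; [:: [:: [:: 0; 0; 60; 62; 0; 0; 0]; [:: 0; 0; 48; 62; 6; 0; 0]; [:: 0; 0; 60; 12; 0; 0; 0]]; [:: [:: 0; 16; 62; 6; 0; 0; 0]; [:: 0; 0; 56; 14; 0; 0; 0]; [:: 0; 48; 28; 0; 0; 0; 0]]; [:: [:: 0; 0; 24; 30; 0; 0; 0]; [:: 0; 0; 0; 28; 6; 0; 0]; [:: 0; 0; 24; 12; 0; 0; 0]]]; [::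 [:: [:: 0; 0; 16; 30; 30; 0; 0]; [:: 0; 0; 0; 24; 30; 0; 0]; [:: 0; 0; 16; 28; 4; 0; 0]]; [:: [:: 0; 0; 24; 30; 0; 0; 0]; [:: 0; 0; 0; 28; 6; 0; 0]; [:: 0; 0; 24; 12; 0; 0; 0]]; [:: [:: 0; 0; 0; 12; 14; 0; 0]; [:: 0; 0; 0; 0; 14; 0; 0]; [:: 0; 0; 0; 12; 4; 0; 0]]]]; [:: [:: [:: [:: 0; 56; 60; 60; 0; 0; 0]; [:: 0; 0; 56; 60; 4; 0; 0]; [:: 0; 48; 56; 8; 0; 0; 0]]; [:: [:: 0; 56; 60; 4; 0; 0; 0]; [:: 0; 0; 60; 12; 0; 0; 0]; [:: 0; 56; 24; 0; 0; 0; 0]]; [:: [:: 0; 0; 28; 28; 0; 0; 0]; [:: 0; 0; 16; 28; 4; 0; 0]; [:: 0; 0; 24; 8; 0; 0; 0]]]; [:: [:: [:: 0; 56; 60; 4; 0; 0; 0]; [:: 0; 0; 60; 12; 0; 0; 0]; [:: 0; 56; 24; 0; 0; 0; 0]]; [:: [:: 0; 60; 12; 0; 0; 0; 0]; [:: 0; 48; 28; 0; 0; 0; 0]; [:: 0; 24; 0; 0; 0; 0; 0]]; [:: [:: 0; 16; 28; 4; 0; 0; 0]; [:: 0; 0; 24; 12; 0; 0; 0]; [:: 0; 16; 8; 0; 0; 0; 0]]]; [:: [:: [:: 0; 0; 28; 28; 0; 0; 0]; [:: 0; 0; 16; 28; 4; 0; 0]; [:: 0; 0; 24; 8; 0; 0;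 0]]; [:: [:: 0; 16; 28; 4; 0; 0; 0]; [:: 0; 0; 24; 12; 0; 0; 0]; [:: 0; 16; 8; 0; 0; 0; 0]]; [:: [:: 0; 0; 8; 12; 0; 0; 0]; [:: 0; 0; 0; 12; 4; 0; 0]; [:: 0; 0; 8; 4; 0; 0; 0]]]]]; [:: [:: [:: [:: [:: 0; 16; 62; 62; 62; 0; 0]; [:: 0; 0; 56; 62; 62; 0; 0]; [:: 0; 48; 60; 60; 4; 0; 0]]; [:: [:: 0; 24; 62; 62; 0; 0; 0]; [:: 0; 0; 60; 62; 6; 0; 0]; [:: 0; 56; 60; 12; 0; 0; 0]]; [:: [:: 0; 0; 28; 30; 30; 0; 0]; [:: 0; 0; 0; 28; 30; 0; 0]; [:: 0; 0; 24; 28; 4; 0; 0]]]; [:: [:: [:: 0; 24; 62; 62; 0; 0; 0]; [:: 0; 0; 60; 62; 6; 0; 0]; [:: 0; 56; 60; 12; 0; 0; 0]]; [:: [:: 0; 28; 62; 6; 0; 0; 0]; [:: 0; 0; 60; 14; 0; 0; 0]; [:: 0; 56; 28; 0; 0; 0; 0]]; [:: [:: 0; 0; 28; 30; 0; 0; 0]; [:: 0; 0; 16; 30; 6; 0; 0]; [:: 0; 0; 28; 12; 0; 0; 0]]]; [:: [:: [:: 0; 0; 28; 30; 30; 0; 0]; [:: 0; 0; 0; 28; 30; 0; 0]; [:: 0; 0; 24; 28; 4; 0; 0]]; [:: [:: 0; 0; 28; 30; 0; 0; 0]; [:: 0; 0; 16; 30; 6; 0; 0]; [:: 0; 0; 28;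 12; 0; 0; 0]]; [:: [:: 0; 0; 0; 14; 14; 0; 0]; [:: 0; 0; 0; 8; 14; 0; 0]; [:: 0; 0; 0; 12; 4; 0; 0]]]]; [:: [:: [:: [:: 0; 0; 56; 62; 62; 0; 0]; [:: 0; 0; 0; 60; 62; 4; 0]; [:: 0; 0; 56; 60; 12; 0; 0]]; [:: [:: 0; 0; 60; 62; 6; 0; 0]; [:: 0; 0; 0; 60; 14; 0; 0]; [:: 0; 0; 56; 28; 0; 0; 0]]; [:: [:: 0; 0; 0; 28; 30; 0; 0]; [:: 0; 0; 0; 16; 30; 6; 0]; [:: 0; 0; 0; 28; 12; 0; 0]]]; [:: [:: [:: 0; 0; 60; 62; 6; 0; 0]; [:: 0; 0; 0; 60; 14; 0; 0]; [:: 0; 0; 56; 28; 0; 0; 0]]; [:: [:: 0; 0; 60; 14; 0; 0; 0]; [:: 0; 0; 48; 30; 0; 0; 0]; [:: 0; 0; 28; 0; 0; 0; 0]]; [:: [:: 0; 0; 16; 30; 6; 0; 0]; [:: 0; 0; 0; 24; 14; 0; 0]; [:: 0; 0; 16; 12; 0; 0; 0]]]; [:: [:: [:: 0; 0; 0; 28; 30; 0; 0]; [:: 0; 0; 0; 16; 30; 6; 0]; [:: 0; 0; 0; 28; 12; 0; 0]]; [:: [:: 0; 0; 16; 30; 6; 0; 0]; [:: 0; 0; 0; 24; 14; 0; 0]; [:: 0; 0; 16; 12; 0; 0; 0]]; [:: [:: 0; 0; 0; 8; 14; 0; 0]; [:: 0; 0; 0; 0; 12; 6; 0]; [:: 0;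 0; 0; 8; 4; 0; 0]]]]; [:: [:: [:: [:: 0; 48; 60; 60; 4; 0; 0]; [:: 0; 0; 56; 60; 12; 0; 0]; [:: 0; 48; 56; 24; 0; 0; 0]]; [:: [:: 0; 56; 60; 12; 0; 0; 0]; [:: 0; 0; 56; 28; 0; 0; 0]; [:: 0; 48; 24; 0; 0; 0; 0]]; [:: [:: 0; 0; 24; 28; 4; 0; 0]; [:: 0; 0; 0; 28; 12; 0; 0]; [:: 0; 0; 24; 8; 0; 0; 0]]]; [:: [:: [:: 0; 56; 60; 12; 0; 0; 0]; [:: 0; 0; 56; 28; 0; 0; 0]; [:: 0; 48; 24; 0; 0; 0; 0]]; [:: [:: 0; 56; 28; 0; 0; 0; 0]; [:: 0; 0; 28; 0; 0; 0; 0]; [:: 0; 56; 0; 0; 0; 0; 0]]; [:: [:: 0; 0; 28; 12; 0; 0; 0]; [:: 0; 0; 16; 12; 0; 0; 0]; [:: 0; 0; 24; 0; 0; 0; 0]]]; [:: [:: [:: 0; 0; 24; 28; 4; 0; 0]; [:: 0; 0; 0; 28; 12; 0; 0]; [:: 0; 0; 24; 8; 0; 0; 0]]; [:: [:: 0; 0; 28; 12; 0; 0; 0]; [:: 0; 0; 16; 12; 0; 0; 0]; [:: 0; 0; 24; 0; 0; 0; 0]]; [:: [:: 0; 0; 0; 12; 4; 0; 0]; [:: 0; 0; 0; 8; 4; 0; 0]; [:: 0; 0; 0; 8; 0; 0; 0]]]]]; [:: [:: [:: [:: [:: 0; 0; 62; 62; 62; 0; 0]; [:: 0; 0; 48; 62;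 62; 4; 0]; [:: 0; 0; 60; 60; 12; 0; 0]]; [:: [:: 0; 16; 62; 62; 6; 0; 0]; [:: 0; 0; 56; 62; 14; 0; 0]; [:: 0; 48; 60; 28; 0; 0; 0]]; [:: [:: 0; 0; 24; 30; 30; 0; 0]; [:: 0; 0; 0; 28; 30; 6; 0]; [:: 0; 0; 24; 28; 12; 0; 0]]]; [:: [:: [:: 0; 16; 62; 62; 6; 0; 0]; [:: 0; 0; 56; 62; 14; 0; 0]; [:: 0; 48; 60; 28; 0; 0; 0]]; [:: [:: 0; 24; 62; 14; 0; 0; 0]; [:: 0; 0; 60; 30; 0; 0; 0]; [:: 0; 56; 28; 0; 0; 0; 0]]; [:: [:: 0; 0; 28; 30; 6; 0; 0]; [:: 0; 0; 0; 28; 14; 0; 0]; [:: 0; 0; 24; 12; 0; 0; 0]]]; [:: [:: [:: 0; 0; 24; 30; 30; 0; 0]; [:: 0; 0; 0; 28; 30; 6; 0]; [:: 0; 0; 24; 28; 12; 0; 0]]; [:: [:: 0; 0; 28; 30; 6; 0; 0]; [:: 0; 0; 0; 28; 14; 0; 0]; [:: 0; 0; 24; 12; 0; 0; 0]]; [:: [:: 0; 0; 0; 12; 14; 0; 0]; [:: 0; 0; 0; 0; 14; 6; 0]; [:: 0; 0; 0; 12; 4; 0; 0]]]]; [:: [:: [:: [:: 0; 0; 48; 62; 62; 4; 0]; [:: 0; 0; 0; 56; 62; 12; 0]; [:: 0; 0; 48; 60; 28; 0; 0]]; [:: [:: 0; 0; 56; 62; 14; 0; 0]; [:: 0; 0;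 0; 60; 30; 0; 0]; [:: 0; 0; 56; 28; 0; 0; 0]]; [:: [:: 0; 0; 0; 28; 30; 6; 0]; [:: 0; 0; 0; 0; 28; 14; 0]; [:: 0; 0; 0; 24; 12; 0; 0]]]; [:: [:: [:: 0; 0; 56; 62; 14; 0; 0]; [:: 0; 0; 0; 60; 30; 0; 0]; [:: 0; 0; 56; 28; 0; 0; 0]]; [:: [:: 0; 0; 60; 30; 0; 0; 0]; [:: 0; 0; 0; 28; 0; 0; 0]; [:: 0; 0; 56; 4; 0; 0; 0]]; [:: [:: 0; 0; 0; 28; 14; 0; 0]; [:: 0; 0; 0; 16; 14; 0; 0]; [:: 0; 0; 0; 28; 0; 0; 0]]]; [:: [:: [:: 0; 0; 0; 28; 30; 6; 0]; [:: 0; 0; 0; 0; 28; 14; 0]; [:: 0; 0; 0; 24; 12; 0; 0]]; [:: [:: 0; 0; 0; 28; 14; 0; 0]; [:: 0; 0; 0; 16; 14; 0; 0]; [:: 0; 0; 0; 28; 0; 0; 0]]; [:: [:: 0; 0; 0; 0; 14; 6; 0]; [:: 0; 0; 0; 0; 8; 6; 0]; [:: 0; 0; 0; 0; 12; 0; 0]]]]; [:: [:: [:: [:: 0; 0; 60; 60; 12; 0; 0]; [:: 0; 0; 48; 60; 28; 0; 0]; [:: 0; 0; 56; 24; 0; 0; 0]]; [:: [:: 0; 48; 60; 28; 0; 0; 0]; [:: 0; 0; 56; 28; 0; 0; 0]; [:: 0; 48; 56; 0; 0; 0; 0]]; [:: [:: 0; 0; 24; 28; 12; 0; 0]; [:: 0;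 0; 0; 24; 12; 0; 0]; [:: 0; 0; 16; 24; 0; 0; 0]]]; [:: [:: [:: 0; 48; 60; 28; 0; 0; 0]; [:: 0; 0; 56; 28; 0; 0; 0]; [:: 0; 48; 56; 0; 0; 0; 0]]; [:: [:: 0; 56; 28; 0; 0; 0; 0]; [:: 0; 0; 56; 4; 0; 0; 0]; [:: 0; 48; 8; 0; 0; 0; 0]]; [:: [:: 0; 0; 24; 12; 0; 0; 0]; [:: 0; 0; 0; 28; 0; 0; 0]; [:: 0; 0; 24; 0; 0; 0; 0]]]; [:: [:: [:: 0; 0; 24; 28; 12; 0; 0]; [:: 0; 0; 0; 24; 12; 0; 0]; [:: 0; 0; 16; 24; 0; 0; 0]]; [:: [:: 0; 0; 24; 12; 0; 0; 0]; [:: 0; 0; 0; 28; 0; 0; 0]; [:: 0; 0; 24; 0; 0; 0; 0]]; [:: [:: 0; 0; 0; 12; 4; 0; 0]; [:: 0; 0; 0; 0; 12; 0; 0]; [:: 0; 0; 0; 8; 0; 0; 0]]]]]; [:: [:: [:: [:: [:: 0; 0; 62; 62; 62; 4; 0]; [:: 0; 0; 0; 62; 62; 12; 0]; [:: 0; 0; 60; 60; 28; 0; 0]]; [:: [:: 0; 0; 62; 62; 14; 0; 0]; [:: 0; 0; 48; 62; 30; 0; 0]; [:: 0; 0; 60; 28; 0; 0; 0]]; [:: [:: 0; 0; 16; 30; 30; 6; 0]; [:: 0; 0; 0; 24; 30; 14; 0]; [:: 0; 0; 16; 28; 12; 0; 0]]]; [:: [:: [:: 0; 0; 62; 62; 14;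 0; 0]; [:: 0; 0; 48; 62; 30; 0; 0]; [:: 0; 0; 60; 28; 0; 0; 0]]; [:: [:: 0; 16; 62; 30; 0; 0; 0]; [:: 0; 0; 56; 30; 0; 0; 0]; [:: 0; 48; 60; 4; 0; 0; 0]]; [:: [:: 0; 0; 24; 30; 14; 0; 0]; [:: 0; 0; 0; 28; 14; 0; 0]; [:: 0; 0; 24; 28; 0; 0; 0]]]; [:: [:: [:: 0; 0; 16; 30; 30; 6; 0]; [:: 0; 0; 0; 24; 30; 14; 0]; [:: 0; 0; 16; 28; 12; 0; 0]]; [:: [:: 0; 0; 24; 30; 14; 0; 0]; [:: 0; 0; 0; 28; 14; 0; 0]; [:: 0; 0; 24; 28; 0; 0; 0]]; [:: [:: 0; 0; 0; 12; 14; 6; 0]; [:: 0; 0; 0; 0; 12; 6; 0]; [:: 0; 0; 0; 8; 12; 0; 0]]]]; [:: [:: [:: [:: 0; 0; 0; 62; 62; 12; 0]; [:: 0; 0; 0; 48; 62; 28; 0]; [:: 0; 0; 0; 60; 28; 0; 0]]; [:: [:: 0; 0; 48; 62; 30; 0; 0]; [:: 0; 0; 0; 56; 30; 0; 0]; [:: 0; 0; 48; 60; 4; 0; 0]]; [:: [:: 0; 0; 0; 24; 30; 14; 0]; [:: 0; 0; 0; 0; 28; 14; 0]; [:: 0; 0; 0; 24; 28; 0; 0]]]; [:: [:: [:: 0; 0; 48; 62; 30; 0; 0]; [:: 0; 0; 0; 56; 30; 0; 0]; [:: 0; 0; 48; 60; 4; 0; 0]]; [:: [:: 0; 0; 56;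 30; 0; 0; 0]; [:: 0; 0; 0; 60; 6; 0; 0]; [:: 0; 0; 56; 12; 0; 0; 0]]; [:: [:: 0; 0; 0; 28; 14; 0; 0]; [:: 0; 0; 0; 0; 28; 0; 0]; [:: 0; 0; 0; 24; 4; 0; 0]]]; [:: [:: [:: 0; 0; 0; 24; 30; 14; 0]; [:: 0; 0; 0; 0; 28; 14; 0]; [:: 0; 0; 0; 24; 28; 0; 0]]; [:: [:: 0; 0; 0; 28; 14; 0; 0]; [:: 0; 0; 0; 0; 28; 0; 0]; [:: 0; 0; 0; 24; 4; 0; 0]]; [:: [:: 0; 0; 0; 0; 12; 6; 0]; [:: 0; 0; 0; 0; 0; 14; 0]; [:: 0; 0; 0; 0; 12; 0; 0]]]]; [:: [:: [:: [:: 0; 0; 60; 60; 28; 0; 0]; [:: 0; 0; 0; 60; 28; 0; 0]; [:: 0; 0; 56; 56; 0; 0; 0]]; [:: [:: 0; 0; 60; 28; 0; 0; 0]; [:: 0; 0; 48; 60; 4; 0; 0]; [:: 0; 0; 56; 8; 0; 0; 0]]; [:: [:: 0; 0; 16; 28; 12; 0; 0]; [:: 0; 0; 0; 24; 28; 0; 0]; [:: 0; 0; 16; 24; 0; 0; 0]]]; [:: [:: [:: 0; 0; 60; 28; 0; 0; 0]; [:: 0; 0; 48; 60; 4; 0; 0]; [:: 0; 0; 56; 8; 0; 0; 0]]; [:: [:: 0; 48; 60; 4; 0; 0; 0]; [:: 0; 0; 56; 12; 0; 0; 0]; [:: 0; 48; 24; 0; 0; 0; 0]]; [:: [:: 0;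 0; 24; 28; 0; 0; 0]; [:: 0; 0; 0; 24; 4; 0; 0]; [:: 0; 0; 16; 8; 0; 0; 0]]]; [:: [:: [:: 0; 0; 16; 28; 12; 0; 0]; [:: 0; 0; 0; 24; 28; 0; 0]; [:: 0; 0; 16; 24; 0; 0; 0]]; [:: [:: 0; 0; 24; 28; 0; 0; 0]; [:: 0; 0; 0; 24; 4; 0; 0]; [:: 0; 0; 16; 8; 0; 0; 0]]; [:: [:: 0; 0; 0; 8; 12; 0; 0]; [:: 0; 0; 0; 0; 12; 0; 0]; [:: 0; 0; 0; 8; 0; 0; 0]]]]]; [:: [:: [:: [:: [:: 0; 0; 62; 62; 62; 12; 0]; [:: 0; 0; 0; 62; 62; 28; 0]; [:: 0; 0; 60; 60; 28; 0; 0]]; [:: [:: 0; 0; 62; 62; 30; 0; 0]; [:: 0; 0; 0; 62; 30; 0; 0]; [:: 0; 0; 60; 60; 4; 0; 0]]; [:: [:: 0; 0; 0; 30; 30; 14; 0]; [:: 0; 0; 0; 16; 30; 14; 0]; [:: 0; 0; 0; 28; 28; 0; 0]]]; [:: [:: [:: 0; 0; 62; 62; 30; 0; 0]; [:: 0; 0; 0; 62; 30; 0; 0]; [:: 0; 0; 60; 60; 4; 0; 0]]; [:: [:: 0; 0; 62; 30; 0; 0; 0]; [:: 0; 0; 48; 62; 6; 0; 0]; [:: 0; 0; 60; 12; 0; 0; 0]]; [:: [:: 0; 0; 16; 30; 14; 0; 0]; [:: 0; 0; 0; 24; 30; 0; 0]; [:: 0; 0; 16; 28; 4; 0; 0]]];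 [:: [:: [:: 0; 0; 0; 30; 30; 14; 0]; [:: 0; 0; 0; 16; 30; 14; 0]; [:: 0; 0; 0; 28; 28; 0; 0]]; [:: [:: 0; 0; 16; 30; 14; 0; 0]; [:: 0; 0; 0; 24; 30; 0; 0]; [:: 0; 0; 16; 28; 4; 0; 0]]; [:: [:: 0; 0; 0; 8; 14; 6; 0]; [:: 0; 0; 0; 0; 12; 14; 0]; [:: 0; 0; 0; 8; 12; 0; 0]]]]; [:: [:: [:: [:: 0; 0; 0; 62; 62; 28; 0]; [:: 0; 0; 0; 0; 62; 28; 0]; [:: 0; 0; 0; 60; 60; 0; 0]]; [:: [:: 0; 0; 0; 62; 30; 0; 0]; [:: 0; 0; 0; 48; 62; 4; 0]; [:: 0; 0; 0; 60; 12; 0; 0]]; [:: [:: 0; 0; 0; 16; 30; 14; 0]; [:: 0; 0; 0; 0; 24; 30; 0]; [:: 0; 0; 0; 16; 28; 4; 0]]]; [:: [:: [:: 0; 0; 0; 62; 30; 0; 0]; [:: 0; 0; 0; 48; 62; 4; 0]; [:: 0; 0; 0; 60; 12; 0; 0]]; [:: [:: 0; 0; 48; 62; 6; 0; 0]; [:: 0; 0; 0; 56; 14; 0; 0]; [:: 0; 0; 48; 28; 0; 0; 0]]; [:: [:: 0; 0; 0; 24; 30; 0; 0]; [:: 0; 0; 0; 0; 28; 6; 0]; [:: 0; 0; 0; 24; 12; 0; 0]]]; [:: [:: [:: 0; 0; 0; 16; 30; 14; 0]; [:: 0; 0; 0; 0; 24; 30; 0]; [:: 0; 0; 0; 16; 28;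 4; 0]]; [:: [:: 0; 0; 0; 24; 30; 0; 0]; [:: 0; 0; 0; 0; 28; 6; 0]; [:: 0; 0; 0; 24; 12; 0; 0]]; [:: [:: 0; 0; 0; 0; 12; 14; 0]; [:: 0; 0; 0; 0; 0; 12; 0]; [:: 0; 0; 0; 0; 8; 4; 0]]]]; [:: [:: [:: [:: 0; 0; 60; 60; 28; 0; 0]; [:: 0; 0; 0; 60; 60; 0; 0]; [:: 0; 0; 56; 56; 8; 0; 0]]; [:: [:: 0; 0; 60; 60; 4; 0; 0]; [:: 0; 0; 0; 60; 12; 0; 0]; [:: 0; 0; 56; 24; 0; 0; 0]]; [:: [:: 0; 0; 0; 28; 28; 0; 0]; [:: 0; 0; 0; 16; 28; 4; 0]; [:: 0; 0; 0; 24; 8; 0; 0]]]; [:: [:: [:: 0; 0; 60; 60; 4; 0; 0]; [:: 0; 0; 0; 60; 12; 0; 0]; [:: 0; 0; 56; 24; 0; 0; 0]]; [:: [:: 0; 0; 60; 12; 0; 0; 0]; [:: 0; 0; 48; 28; 0; 0; 0]; [:: 0; 0; 56; 0; 0; 0; 0]]; [:: [:: 0; 0; 16; 28; 4; 0; 0]; [:: 0; 0; 0; 24; 12; 0; 0]; [:: 0; 0; 16; 24; 0; 0; 0]]]; [:: [:: [:: 0; 0; 0; 28; 28; 0; 0]; [:: 0; 0; 0; 16; 28; 4; 0]; [:: 0; 0; 0; 24; 8; 0; 0]]; [:: [:: 0; 0; 16; 28; 4; 0; 0]; [:: 0; 0; 0; 24; 12; 0; 0]; [:: 0; 0; 16;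 24; 0; 0; 0]]; [:: [:: 0; 0; 0; 8; 12; 0; 0]; [:: 0; 0; 0; 0; 8; 4; 0]; [:: 0; 0; 0; 16; 8; 0; 0]]]]]; [:: [:: [:: [:: [:: 0; 0; 62; 62; 62; 28; 0]; [:: 0; 0; 0; 62; 62; 28; 0]; [:: 0; 0; 60; 60; 60; 0; 0]]; [:: [:: 0; 0; 62; 62; 30; 0; 0]; [:: 0; 0; 0; 62; 62; 4; 0]; [:: 0; 0; 60; 60; 12; 0; 0]]; [:: [:: 0; 0; 0; 30; 30; 14; 0]; [:: 0; 0; 0; 0; 30; 30; 0]; [:: 0; 0; 0; 28; 28; 4; 0]]]; [:: [:: [:: 0; 0; 62; 62; 30; 0; 0]; [:: 0; 0; 0; 62; 62; 4; 0]; [:: 0; 0; 60; 60; 12; 0; 0]]; [:: [:: 0; 0; 62; 62; 6; 0; 0]; [:: 0; 0; 0; 62; 14; 0; 0]; [:: 0; 0; 60; 28; 0; 0; 0]]; [:: [:: 0; 0; 0; 30; 30; 0; 0]; [:: 0; 0; 0; 16; 30; 6; 0]; [:: 0; 0; 0; 28; 12; 0; 0]]]; [:: [:: [:: 0; 0; 0; 30; 30; 14; 0]; [:: 0; 0; 0; 0; 30; 30; 0]; [:: 0; 0; 0; 28; 28; 4; 0]]; [:: [:: 0; 0; 0; 30; 30; 0; 0]; [:: 0; 0; 0; 16; 30; 6; 0]; [:: 0; 0; 0; 28; 12; 0; 0]]; [:: [:: 0; 0; 0; 0; 14; 14; 0]; [:: 0; 0; 0; 0; 8; 14; 0]; [::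 0; 0; 0; 0; 12; 4; 0]]]]; [:: [:: [:: [:: 0; 0; 0; 62; 62; 28; 0]; [:: 0; 0; 0; 0; 62; 60; 4]; [:: 0; 0; 0; 60; 60; 8; 0]]; [:: [:: 0; 0; 0; 62; 62; 4; 0]; [:: 0; 0; 0; 0; 62; 12; 0]; [:: 0; 0; 0; 60; 28; 0; 0]]; [:: [:: 0; 0; 0; 0; 30; 30; 0]; [:: 0; 0; 0; 0; 16; 30; 4]; [:: 0; 0; 0; 0; 28; 12; 0]]]; [:: [:: [:: 0; 0; 0; 62; 62; 4; 0]; [:: 0; 0; 0; 0; 62; 12; 0]; [:: 0; 0; 0; 60; 28; 0; 0]]; [:: [:: 0; 0; 0; 62; 14; 0; 0]; [:: 0; 0; 0; 48; 30; 0; 0]; [:: 0; 0; 0; 60; 0; 0; 0]]; [:: [:: 0; 0; 0; 16; 30; 6; 0]; [:: 0; 0; 0; 0; 24; 14; 0]; [:: 0; 0; 0; 16; 28; 0; 0]]]; [:: [:: [:: 0; 0; 0; 0; 30; 30; 0]; [:: 0; 0; 0; 0; 16; 30; 4]; [:: 0; 0; 0; 0; 28; 12; 0]]; [:: [:: 0; 0; 0; 16; 30; 6; 0]; [:: 0; 0; 0; 0; 24; 14; 0]; [:: 0; 0; 0; 16; 28; 0; 0]]; [:: [:: 0; 0; 0; 0; 8; 14; 0]; [:: 0; 0; 0; 0; 0; 12; 6]; [:: 0; 0; 0; 0; 24; 12; 0]]]]; [:: [:: [:: [:: 0; 0; 60; 60; 60; 0; 0]; [:: 0; 0; 0; 60;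 60; 8; 0]; [:: 0; 0; 56; 56; 24; 0; 0]]; [:: [:: 0; 0; 60; 60; 12; 0; 0]; [:: 0; 0; 0; 60; 28; 0; 0]; [:: 0; 0; 56; 56; 0; 0; 0]]; [:: [:: 0; 0; 0; 28; 28; 4; 0]; [:: 0; 0; 0; 0; 28; 12; 0]; [:: 0; 0; 0; 56; 24; 0; 0]]]; [:: [:: [:: 0; 0; 60; 60; 12; 0; 0]; [:: 0; 0; 0; 60; 28; 0; 0]; [:: 0; 0; 56; 56; 0; 0; 0]]; [:: [:: 0; 0; 60; 28; 0; 0; 0]; [:: 0; 0; 0; 60; 0; 0; 0]; [:: 0; 0; 56; 0; 0; 0; 0]]; [:: [:: 0; 0; 0; 28; 12; 0; 0]; [:: 0; 0; 0; 16; 28; 0; 0]; [:: 0; 0; 0; 24; 0; 0; 0]]]; [:: [:: [:: 0; 0; 0; 28; 28; 4; 0]; [:: 0; 0; 0; 0; 28; 12; 0]; [:: 0; 0; 0; 56; 24; 0; 0]]; [:: [:: 0; 0; 0; 28; 12; 0; 0]; [:: 0; 0; 0; 16; 28; 0; 0]; [:: 0; 0; 0; 24; 0; 0; 0]]; [:: [:: 0; 0; 0; 0; 12; 4; 0]; [:: 0; 0; 0; 0; 24; 12; 0]; [:: 0; 0; 0; 16; 8; 0; 0]]]]]; [:: [:: [:: [:: [:: 0; 0; 62; 62; 62; 28; 0]; [:: 0; 0; 0; 62; 62; 60; 4]; [:: 0; 0; 60; 60; 60; 8; 0]]; [:: [:: 0; 0; 62; 62; 62; 4; 0]; [:: 0;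 0; 0; 62; 62; 12; 0]; [:: 0; 0; 60; 60; 28; 0; 0]]; [:: [:: 0; 0; 0; 30; 30; 30; 0]; [:: 0; 0; 0; 0; 30; 30; 4]; [:: 0; 0; 0; 28; 28; 12; 0]]]; [:: [:: [:: 0; 0; 62; 62; 62; 4; 0]; [:: 0; 0; 0; 62; 62; 12; 0]; [:: 0; 0; 60; 60; 28; 0; 0]]; [:: [:: 0; 0; 62; 62; 14; 0; 0]; [:: 0; 0; 0; 62; 30; 0; 0]; [:: 0; 0; 60; 60; 0; 0; 0]]; [:: [:: 0; 0; 0; 30; 30; 6; 0]; [:: 0; 0; 0; 0; 30; 14; 0]; [:: 0; 0; 0; 28; 28; 0; 0]]]; [:: [:: [:: 0; 0; 0; 30; 30; 30; 0]; [:: 0; 0; 0; 0; 30; 30; 4]; [:: 0; 0; 0; 28; 28; 12; 0]]; [:: [:: 0; 0; 0; 30; 30; 6; 0]; [:: 0; 0; 0; 0; 30; 14; 0]; [:: 0; 0; 0; 28; 28; 0; 0]]; [:: [:: 0; 0; 0; 0; 14; 14; 0]; [:: 0; 0; 0; 0; 0; 14; 6]; [:: 0; 0; 0; 0; 28; 12; 0]]]]; [:: [:: [:: [:: 0; 0; 0; 62; 62; 60; 4]; [:: 0; 0; 0; 0; 62; 60; 12]; [:: 0; 0; 0; 60; 60; 24; 0]]; [:: [:: 0; 0; 0; 62; 62; 12; 0]; [:: 0; 0; 0; 0; 62; 28; 0]; [:: 0; 0; 0; 60; 60; 0; 0]]; [:: [:: 0; 0; 0; 0; 30; 30; 4]; [::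 0; 0; 0; 0; 0; 30; 12]; [:: 0; 0; 0; 0; 60; 28; 0]]]; [:: [:: [:: 0; 0; 0; 62; 62; 12; 0]; [:: 0; 0; 0; 0; 62; 28; 0]; [:: 0; 0; 0; 60; 60; 0; 0]]; [:: [:: 0; 0; 0; 62; 30; 0; 0]; [:: 0; 0; 0; 0; 62; 0; 0]; [:: 0; 0; 0; 60; 4; 0; 0]]; [:: [:: 0; 0; 0; 0; 30; 14; 0]; [:: 0; 0; 0; 0; 16; 30; 0]; [:: 0; 0; 0; 0; 28; 0; 0]]]; [:: [:: [:: 0; 0; 0; 0; 30; 30; 4]; [:: 0; 0; 0; 0; 0; 30; 12]; [:: 0; 0; 0; 0; 60; 28; 0]]; [:: [:: 0; 0; 0; 0; 30; 14; 0]; [:: 0; 0; 0; 0; 16; 30; 0]; [:: 0; 0; 0; 0; 28; 0; 0]]; [:: [:: 0; 0; 0; 0; 0; 14; 6]; [:: 0; 0; 0; 0; 0; 24; 14]; [:: 0; 0; 0; 0; 16; 12; 0]]]]; [:: [:: [:: [:: 0; 0; 60; 60; 60; 8; 0]; [:: 0; 0; 0; 60; 60; 24; 0]; [:: 0; 0; 56; 120; 56; 0; 0]]; [:: [:: 0; 0; 60; 60; 28; 0; 0]; [:: 0; 0; 0; 60; 60; 0; 0]; [:: 0; 0; 56; 56; 0; 0; 0]]; [:: [:: 0; 0; 0; 28; 28; 12; 0]; [:: 0; 0; 0; 0; 60; 28; 0]; [:: 0; 0; 0; 56; 24; 0; 0]]]; [:: [:: [:: 0; 0; 60; 60; 28;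 0; 0]; [:: 0; 0; 0; 60; 60; 0; 0]; [:: 0; 0; 56; 56; 0; 0; 0]]; [:: [:: 0; 0; 60; 60; 0; 0; 0]; [:: 0; 0; 0; 60; 4; 0; 0]; [:: 0; 0; 56; 8; 0; 0; 0]]; [:: [:: 0; 0; 0; 28; 28; 0; 0]; [:: 0; 0; 0; 0; 28; 0; 0]; [:: 0; 0; 0; 24; 0; 0; 0]]]; [:: [:: [:: 0; 0; 0; 28; 28; 12; 0]; [:: 0; 0; 0; 0; 60; 28; 0]; [:: 0; 0; 0; 56; 24; 0; 0]]; [:: [:: 0; 0; 0; 28; 28; 0; 0]; [:: 0; 0; 0; 0; 28; 0; 0]; [:: 0; 0; 0; 24; 0; 0; 0]]; [:: [:: 0; 0; 0; 0; 28; 12; 0]; [:: 0; 0; 0; 0; 16; 12; 0]; [:: 0; 0; 0; 0; 8; 0; 0]]]]]].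

Lemma allLP (P : letter -> bool) : allL P -> forall x, P x.
Proof. by case/and3P => h1 h2 h3; case. Qed.

Lemma inrP lo hi x : inr lo hi x = true <-> (lo <= x <= hi).
Proof. by rewrite /inr; split; [move/andP => [/Z.leb_le ? /Z.leb_le ?] | move=> [/Z.leb_le -> /Z.leb_le ->]]. Qed.

Lemma rng4P (P : Z -> bool) k : all P rng4 -> -4 <= k <= 4 -> P k.
Proof.
rewrite /rng4 /= => /and5P [h1 h2 h3 h4 /and5P [h5 h6 h7 h8 /andP [h9 _]]] hk.
have : k = -4 \/ k = -3 \/ k = -2 \/ k = -1 \/ k = 0 \/ k = 1 \/ k = 2 \/ k = 3 \/ k = 4 by lia.
by case=> [->|[->|[->|[->|[->|[->|[->|[->|->]]]]]]]].
Qed.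

Lemma rng3P (P : Z -> bool) k : all P rng3 -> -3 <= k <= 3 -> P k.
Proof.
rewrite /rng3 /= => /and5P [h1 h2 h3 h4 /and3P [h5 h6 /andP [h7 _]]] hk.
have : k = -3 \/ k = -2 \/ k = -1 \/ k = 0 \/ k = 1 \/ k = 2 \/ k = 3 by lia.
by case=> [->|[->|[->|[->|[->|[->|->]]]]]].
Qed.

Lemma allstatesP P k dS dM f g f' g' : allstates P ->
  -4 <= k <= 4 -> -3 <= dS <= 3 -> -3 <= dM <= 3 -> P k dS dM f g f' g'.
Proof.
move=> H hk hS hM.
have := rng4P H hk => /rng3P /(_ hS) /rng3P /(_ hM).
by move/allLP/(_ f)/allLP/(_ g)/allLP/(_ f')/allLP/(_ g').
Qed.

Lemma INVt_rng T k dS dM f g f' g' : INVt T k dS dM f g f' g' ->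
  [/\ -4 <= k <= 4, -3 <= dS <= 3 & -3 <= dM <= 3].
Proof. by case/and4P => /inrP ? /inrP ? /inrP ? _. Qed.

Lemma cls_ok p a r (P : _ -> bool) : (1 < p)%N -> (r < size (tau p a))%N -> all P (cls a) ->
  exists c, [/\ P c, nth L (tau p a) r = cl c &
     lo0 c + lo1 c * Z.of_nat p <= Z.of_nat r <= hi0 c + hi1 c * Z.of_nat p].
Proof.
move=> hp hr; rewrite nth_tau //; move: hr; case: a => /=.
- rewrite size_rcons size_nseq => hr /and3P [h1 h2 _].
  case: eqP => E; [exists (S, 0, 1, 0, 1) | exists (L, 0, 0, -1, 1)]; split => //; cbn [lo0 lo1 hi0 hi1 cl fst snd]; lia.
- move=> hr /andP [h1 _]; exists (M, 0, 0, 0, 0); split => //; cbn [lo0 lo1 hi0 hi1 cl fst snd]; lia.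
- rewrite size_rcons size_nseq => hr /and3P [h1 h2 _].
  case: eqP => E; [exists (S, -1, 1, -1, 1) | exists (L, 0, 0, -2, 1)]; split => //; cbn [lo0 lo1 hi0 hi1 cl fst snd]; lia.
Qed.

Lemma closure_sound T F p k1 eS eM a b a' b' r t r' t' :
  check_closure T F ->
  (forall A0 A1 B0 B1 k, A0 + A1 * Z.of_nat p <= k <= B0 + B1 * Z.of_nat p -> -4 <= k <= 4 ->
     F A0 A1 B0 B1 k) ->
  (1 < p)%N -> INVt T k1 eS eM a b a' b' ->
  (r < size (tau p a))%N -> (t < size (tau p b))%N -> (r' < size (tau p a'))%N -> (t' < size (tau p b'))%N ->
  -4 <= (Z.of_nat p + 1) * k1 - Z.of_nat p * eS - eM - Z.of_nat r + Z.of_nat t + Z.of_nat r' - Z.of_nat t' <= 4 ->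
  INVt T ((Z.of_nat p + 1) * k1 - Z.of_nat p * eS - eM - Z.of_nat r + Z.of_nat t + Z.of_nat r' - Z.of_nat t')
    (k1 - eS) eS (nth L (tau p a) r) (nth L (tau p b) t) (nth L (tau p a') r') (nth L (tau p b') t').
Proof.
move=> HC HF hp HI hr ht hr' ht' hk.
have [h1 h2 h3] := INVt_rng HI.
have := allstatesP a b a' b' HC h1 h2 h3; rewrite HI /closure_ok => H.
have [ca [H1 -> Br]] := cls_ok hp hr H.
have [cb [H2 -> Bt]] := cls_ok hp ht H1.
have [ca' [H3 -> Br']] := cls_ok hp hr' H2.
have [cb' [H4 -> Bt']] := cls_ok hp ht' H3.
have := rng4P H4 hk; rewrite HF //; lia.
Qed.

Lemma F2_sound A0 A1 B0 B1 k : A0 + A1 * Z.of_nat 2 <= k <= B0 + B1 * Z.of_nat 2 -> F2 A0 A1 B0 B1 k.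
Proof. by move=> [h1 h2]; rewrite /F2 /cond; apply/andP; split; apply/Z.leb_le. Qed.

Lemma F3_sound p A0 A1 B0 B1 k : (3 <= p)%N ->
  A0 + A1 * Z.of_nat p <= k <= B0 + B1 * Z.of_nat p -> -4 <= k <= 4 -> F3 A0 A1 B0 B1 k.
Proof.
move=> hp hc hk; rewrite /F3; apply/orP.
case: (leqP p (Z.to_nat (4 + Z.abs A0 + Z.abs B0)).+2) => hP.
  left; apply/hasP; exists p; last by rewrite /cond; apply/andP; split; apply/Z.leb_le; lia.
  rewrite mem_iota; apply/andP; split => //; lia.
right.
have hA1 : A1 <= 0 by nia.
have hB1 : 0 <= B1 by nia.
apply/and4P; split.
- by apply/Z.leb_le.
- by apply/Z.leb_le.
- case: (Z.ltb_spec A1 0) => //= hh; apply/Z.leb_le; nia.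
- case: (Z.ltb_spec 0 B1) => //= hh; apply/Z.leb_le; nia.
Qed.

Lemma size_tauZ p a : (0 < p)%N -> Z.of_nat (size (tau p a)) = s0 a + s1 a * Z.of_nat p.
Proof. move=> hp; rewrite size_tau // /s0 /s1; case: a; cbv iota beta; lia. Qed.

Lemma outr_sound T G p k eS eM a b1 a' b' : (0 < p)%N -> check_outr T G ->
  (forall C0 C1, G C0 C1 -> 4 < C0 + C1 * Z.of_nat p) ->
  INVt T k eS eM a b1 a' b' -> k = 4 ->
  4 < (Z.of_nat p + 1) * 4 - Z.of_nat p * eS - eM + Z.of_nat (size (tau p b1))
        - Z.of_nat (size (tau p a)) - Z.of_nat (size (tau p b')) + 2.
Proof.
move=> hp HC HG HI hk; have [h1 h2 h3] := INVt_rng HI.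
have := allstatesP a b1 a' b' HC h1 h2 h3; rewrite HI hk implyTb => /orP [|/HG].
  by rewrite Z.eqb_refl.
rewrite !size_tauZ //; lia.
Qed.

Lemma final_sound T k dS dM f g f' g' : check_final T -> INVt T k dS dM f g f' g' -> k = 0 ->
  -2 <= dS <= 2 /\ -2 <= dM <= 2.
Proof.
move=> HC HI hk; have [h1 h2 h3] := INVt_rng HI.
have := allstatesP f g f' g' HC h1 h2 h3; rewrite HI hk implyTb => /orP [|/andP [/inrP ? /inrP ?]]; last by split.
by rewrite Z.eqb_refl.
Qed.

Lemma base_sound T n n' x0 x1 x2 y0 y1 y2 : check_base T -> (n <= 2)%N -> (n' <= 2)%N ->
  ok2 x0 x1 -> ok2 x1 x2 -> ok2 y0 y1 -> ok2 y1 y2 ->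
  INVt T (Z.of_nat n - Z.of_nat n') (wcS n [:: x0; x1; x2] - wcS n' [:: y0; y1; y2])
        (wcM n [:: x0; x1; x2] - wcM n' [:: y0; y1; y2]) x0 (nth L [:: x0; x1; x2] n) y0 (nth L [:: y0; y1; y2] n').
Proof.
move=> HC hn hn' o1 o2 o3 o4.
move/allP: HC => /(_ n); rewrite mem_iota => /(_ hn) /allP /(_ n'); rewrite mem_iota => /(_ hn').
move/allLP/(_ x0)/allLP/(_ x1)/allLP/(_ x2)/allLP/(_ y0)/allLP/(_ y1)/allLP/(_ y2).
by rewrite o1 o2 o3 o4.
Qed.

Definition Tp (p : nat) : TT := if p == 2%N then T2 else T3.

Lemma chk_c2 : check_closure T2 F2. Proof. vm_compute. reflexivity. Qed.
Lemma chk_c3 : check_closure T3 F3. Proof. vm_compute. reflexivity. Qed.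
Lemma chk_o2 : check_outr T2 G2. Proof. vm_compute. reflexivity. Qed.
Lemma chk_o3 : check_outr T3 G3. Proof. vm_compute. reflexivity. Qed.
Lemma chk_f2 : check_final T2. Proof. vm_compute. reflexivity. Qed.
Lemma chk_f3 : check_final T3. Proof. vm_compute. reflexivity. Qed.
Lemma chk_b2 : check_base T2. Proof. vm_compute. reflexivity. Qed.
Lemma chk_b3 : check_base T3. Proof. vm_compute. reflexivity. Qed.

Lemma INV_closure p k1 eS eM a b a' b' r t r' t' :
  (1 < p)%N -> INVt (Tp p) k1 eS eM a b a' b' ->
  (r < size (tau p a))%N -> (t < size (tau p b))%N -> (r' < size (tau p a'))%N -> (t' < size (tau p b'))%N ->
  -4 <= (Z.of_nat p + 1) * k1 - Z.of_nat p * eS - eM - Z.of_nat r + Z.of_nat t + Z.of_nat r' - Z.of_nat t' <= 4 ->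
  INVt (Tp p) ((Z.of_nat p + 1) * k1 - Z.of_nat p * eS - eM - Z.of_nat r + Z.of_nat t + Z.of_nat r' - Z.of_nat t')
    (k1 - eS) eS (nth L (tau p a) r) (nth L (tau p b) t) (nth L (tau p a') r') (nth L (tau p b') t').
Proof.
rewrite /Tp; case: eqP => [->|hp2] hp.
  apply: closure_sound chk_c2 _ hp => A0 A1 B0 B1 k h _; exact: F2_sound.
apply: closure_sound chk_c3 _ (hp) => A0 A1 B0 B1 k h hk; apply: (@F3_sound p) => //.
by case: p hp hp2 {h} => [|[|[|]]].
Qed.

Lemma INV_outr p k eS eM a b1 a' b' : (1 < p)%N -> INVt (Tp p) k eS eM a b1 a' b' -> k = 4 ->
  4 < (Z.of_nat p + 1) * 4 - Z.of_nat p * eS - eM + Z.of_nat (size (tau p b1))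
        - Z.of_nat (size (tau p a)) - Z.of_nat (size (tau p b')) + 2.
Proof.
rewrite /Tp; case: eqP => [->|hp2] hp.
  apply: outr_sound chk_o2 _ => // C0 C1; rewrite /G2 => /Z.ltb_lt; lia.
apply: outr_sound chk_o3 _ => //; first exact: ltnW.
move=> C0 C1; rewrite /G3 => /andP [/Z.leb_le h1 /Z.ltb_lt h2].
have hp3 : (3 <= p)%N by case: p hp hp2 {h1 h2} => [|[|[|]]].
nia.
Qed.

Lemma INV_final p k dS dM f g f' g' : INVt (Tp p) k dS dM f g f' g' -> k = 0 ->
  -2 <= dS <= 2 /\ -2 <= dM <= 2.
Proof. rewrite /Tp; case: eqP => _; [exact: final_sound chk_f2 | exact: final_sound chk_f3]. Qed.

Lemma INV_base p n n' x0 x1 x2 y0 y1 y2 : (n <= 2)%N -> (n' <= 2)%N ->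
  ok2 x0 x1 -> ok2 x1 x2 -> ok2 y0 y1 -> ok2 y1 y2 ->
  INVt (Tp p) (Z.of_nat n - Z.of_nat n') (wcS n [:: x0; x1; x2] - wcS n' [:: y0; y1; y2])
        (wcM n [:: x0; x1; x2] - wcM n' [:: y0; y1; y2]) x0 (nth L [:: x0; x1; x2] n) y0 (nth L [:: y0; y1; y2] n').
Proof. rewrite /Tp; case: eqP => _; [exact: base_sound chk_b2 | exact: base_sound chk_b3]. Qed.


Lemma factor_small p i n : (n <= 2)%N -> factor p i n = take n [:: u p i; u p i.+1; u p i.+2].
Proof. by case: n => [|[|[|]]] // _; rewrite /factor /mkseq /= ?addn0 ?addn1. Qed.

Lemma next_small p i n : (n <= 2)%N -> u p (i + n) = nth L [:: u p i; u p i.+1; u p i.+2] n.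
Proof. by case: n => [|[|[|]]] // _; rewrite ?addn0 ?addn1 ?addn2. Qed.

Definition cSz p i n := Z.of_nat (count isS (factor p i n)).
Definition cMz p i n := Z.of_nat (count isM (factor p i n)).
Definition st p i n i' n' :=
  INVt (Tp p) (Z.of_nat n - Z.of_nat n') (cSz p i n - cSz p i' n') (cMz p i n - cMz p i' n')
    (u p i) (u p (i + n)) (u p i') (u p (i' + n')).

Lemma base_case p i n i' n' : (1 < p)%N -> (n <= 2)%N -> (n' <= 2)%N -> st p i n i' n'.
Proof.
move=> hp hn hn'; rewrite /st /cSz /cMz (factor_small p i hn) (factor_small p i' hn').
rewrite (next_small p i hn) (next_small p i' hn').
have o1 := adj i hp; have o2 := adj i.+1 hp; have o3 := adj i' hp; have o4 := adj i'.+1 hp.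
have H := INV_base p hn hn' o1 o2 o3 o4.
rewrite /wcS /wcM in H; exact H.
Qed.

Lemma INV_closure' p k1 eS eM a b a' b' r t r' t' K dS dM f g f' g' :
  (1 < p)%N -> INVt (Tp p) k1 eS eM a b a' b' ->
  (r < size (tau p a))%N -> (t < size (tau p b))%N -> (r' < size (tau p a'))%N -> (t' < size (tau p b'))%N ->
  K = (Z.of_nat p + 1) * k1 - Z.of_nat p * eS - eM - Z.of_nat r + Z.of_nat t + Z.of_nat r' - Z.of_nat t' ->
  dS = k1 - eS -> dM = eS -> f = nth L (tau p a) r -> g = nth L (tau p b) t ->
  f' = nth L (tau p a') r' -> g' = nth L (tau p b') t' -> -4 <= K <= 4 ->
  INVt (Tp p) K dS dM f g f' g'.
Proof.
move=> hp HI hr ht hr' ht' -> -> -> -> -> -> -> hK.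
exact: INV_closure.
Qed.

Lemma size_phi_split p al m1 m : (m1 < m)%N ->
  (size (phi p (factor p al m1)) + size (tau p (u p (al + m1))) <= size (phi p (factor p al m)))%N.
Proof.
move=> hm; rewrite (_ : m = m1 + (m - m1))%N; last by lia.
rewrite factor_cat phi_cat size_cat leq_add2l.
case E: (m - m1)%N => [|d]; first by move: hm; rewrite -subn_gt0 E.
by rewrite -add1n factor_cat factor1 cat1s phi_cons size_cat leq_addr.
Qed.

Lemma step p N : (1 < p)%N ->
  (forall i n i' n', (n + n' < N)%N -> -4 <= Z.of_nat n - Z.of_nat n' <= 4 -> st p i n i' n') ->
  forall i n i' n', (n + n' <= N)%N -> -4 <= Z.of_nat n - Z.of_nat n' <= 4 -> st p i n i' n'.
Proof.
move=> hp IH i n i' n' hN hk.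
have hp0 : (0 < p)%N by apply: ltnW.
case: (boolP ((n <= 2) && (n' <= 2))%N) => [/andP [hn hn'] | hbig]; first exact: base_case.
have hbig' : (2 < n)%N \/ (2 < n')%N by move: hbig; rewrite negb_and -!ltnNge => /orP.
have [al [be [r [t [hab Ei hr Ein ht]]]]] := window i n hp0.
have [al' [be' [r' [t' [hab' Ei' hr' Ein' ht']]]]] := window i' n' hp0.
have [Elen ES EM Eu Eun] := window_facts hp hab Ei hr Ein ht.
have [Elen' ES' EM' Eu' Eun'] := window_facts hp hab' Ei' hr' Ein' ht'.
have [Vm Vm2] := V_small hp hr Elen.
have [Vm' Vm2'] := V_small hp hr' Elen'.
have [c1 c2 c3] := phi_counts (factor p al (be - al)) hp0.
have [c1' c2' c3'] := phi_counts (factor p al' (be' - al')) hp0.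
rewrite size_factor in c1 c3; rewrite size_factor in c1' c3'.
have hlt : ((be - al) + (be' - al') < n + n')%N.
  by case: hbig' => h; [have := Vm2 h | have := Vm2' h]; lia.
case: (Z_lt_le_dec 4 (Z.of_nat (be - al) - Z.of_nat (be' - al'))) => hk1.
  have Hst := IH al ((be' - al') + 4)%N al' (be' - al')%N ltac:(lia) ltac:(lia).
  rewrite /st (subnKC hab') in Hst.
  have H := INV_outr hp Hst ltac:(lia).
  have hsp := size_phi_split p al (m1 := (be' - al') + 4) (m := (be - al)%N) ltac:(lia).
  have [d1 d2 d3] := phi_counts (factor p al ((be' - al') + 4)%N) hp0.
  rewrite size_factor in d1 d3.
  move: H; rewrite /cSz /cMz; lia.
case: (Z_lt_le_dec (Z.of_nat (be - al) - Z.of_nat (be' - al')) (-4)) => hk2.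
  have Hst := IH al' ((be - al) + 4)%N al (be - al)%N ltac:(lia) ltac:(lia).
  rewrite /st (subnKC hab) in Hst.
  have H := INV_outr hp Hst ltac:(lia).
  have hsp := size_phi_split p al' (m1 := (be - al) + 4) (m := (be' - al')%N) ltac:(lia).
  have [d1 d2 d3] := phi_counts (factor p al' ((be - al) + 4)%N) hp0.
  rewrite size_factor in d1 d3.
  move: H; rewrite /cSz /cMz; lia.
have Hst := IH al (be - al)%N al' (be' - al')%N ltac:(lia) ltac:(lia).
rewrite /st (subnKC hab) (subnKC hab') in Hst.
rewrite /st.
apply: (INV_closure' hp Hst hr ht hr' ht') => //.
- rewrite /cSz /cMz; lia.
- rewrite /cSz; lia.
- rewrite /cSz /cMz; lia.
Qed.

Lemma main p N : (1 < p)%N ->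
  forall i n i' n', (n + n' < N)%N -> -4 <= Z.of_nat n - Z.of_nat n' <= 4 -> st p i n i' n'.
Proof.
move=> hp; elim: N => [|N IH]; first by move=> i n i' n'; rewrite ltn0.
move=> i n i' n' hN hk; apply: (step hp IH) => //; lia.
Qed.


Lemma balance p n i i' : (1 < p)%N ->
  -2 <= cSz p i n - cSz p i' n <= 2 /\ -2 <= cMz p i n - cMz p i' n <= 2.
Proof.
move=> hp; have H := @main p (n + n).+1 hp i n i' n (ltnSn _) ltac:(lia).
exact: (INV_final H ltac:(lia)).
Qed.

Lemma choose_mid (f : nat -> nat) : (forall i j, -2 <= Z.of_nat (f i) - Z.of_nat (f j) <= 2) ->
  exists s : nat, forall i, Z.of_nat s - 1 <= Z.of_nat (f i) <= Z.of_nat s + 1.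
Proof.
move=> H.
case: (classic (exists j, (f j + 2)%N = f 0%N)) => [[j Hj]|nA].
  exists (f 0%N - 1)%N => i; have := H i j; have := H i 0%N; lia.
case: (classic (exists j, f j = (f 0%N + 2)%N)) => [[j Hj]|nB].
  exists (f 0%N + 1)%N => i; have := H i j; have := H i 0%N; lia.
exists (f 0%N) => i; have := H i 0%N.
have h1 : (f i + 2)%N <> f 0%N by move=> E; apply: nA; exists i.
have h2 : f i <> (f 0%N + 2)%N by move=> E; apply: nB; exists i.
lia.
Qed.

Lemma count_letters (w : seq letter) : (count isL w + count isS w + count isM w)%N = size w.
Proof. by elim: w => //= a w IH; case: a => /=; lia. Qed.


Lemma psi_mem (n s m cL cS cM : nat) : (cL + cS + cM)%N = n ->
  Z.of_nat s - 1 <= Z.of_nat cS <= Z.of_nat s + 1 ->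
  Z.of_nat m - 1 <= Z.of_nat cM <= Z.of_nat m + 1 ->
  (Posz cL, Posz cS, Posz cM) \in Psi_list n s m.
Proof.
move=> hn hs hm; rewrite /Psi_list; cbv zeta.
have [eS|[eS|eS]] : (cS + 1 = s \/ cS = s \/ cS = s + 1)%N by lia.
all: have [eM|[eM|eM]] : (cM + 1 = m \/ cM = m \/ cM = m + 1)%N by lia.
- have -> : (Posz cL, Posz cS, Posz cM) = ((Posz n - Posz s - Posz m + 2, Posz s - 1, Posz m - 1))%R
    by congr (_, _, _); lia.
  by rewrite !inE eqxx ?orbT.
- have -> : (Posz cL, Posz cS, Posz cM) = ((Posz n - Posz s - Posz m + 1, Posz s - 1, Posz m : int))%R
    by congr (_, _, _); lia.
  by rewrite !inE eqxx ?orbT.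
- have -> : (Posz cL, Posz cS, Posz cM) = ((Posz n - Posz s - Posz m, Posz s - 1, Posz m + 1))%R
    by congr (_, _, _); lia.
  by rewrite !inE eqxx ?orbT.
- have -> : (Posz cL, Posz cS, Posz cM) = ((Posz n - Posz s - Posz m + 1, Posz s : int, Posz m - 1))%R
    by congr (_, _, _); lia.
  by rewrite !inE eqxx ?orbT.
- have -> : (Posz cL, Posz cS, Posz cM) = ((Posz n - Posz s - Posz m, Posz s : int, Posz m : int))%R
    by congr (_, _, _); lia.
  by rewrite !inE eqxx ?orbT.
- have -> : (Posz cL, Posz cS, Posz cM) = ((Posz n - Posz s - Posz m - 1, Posz s : int, Posz m + 1))%R
    by congr (_, _, _); lia.
  by rewrite !inE eqxx ?orbT.
- have -> : (Posz cL, Posz cS, Posz cM) = ((Posz n - Posz s - Posz m, Posz s + 1, Posz m - 1))%R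
    by congr (_, _, _); lia.
  by rewrite !inE eqxx ?orbT.
- have -> : (Posz cL, Posz cS, Posz cM) = ((Posz n - Posz s - Posz m - 1, Posz s + 1, Posz m : int))%R
    by congr (_, _, _); lia.
  by rewrite !inE eqxx ?orbT.
- have -> : (Posz cL, Posz cS, Posz cM) = ((Posz n - Posz s - Posz m - 2, Posz s + 1, Posz m + 1))%R
    by congr (_, _, _); lia.
  by rewrite !inE eqxx ?orbT.
Qed.

Local Close Scope Z_scope.

Theorem proposition8p1 (p : nat) (hp : (1 < p)%N) (n : nat) :
  (exists s_n m_n : nat, forall v, Pu p n v -> v \in Psi_list n s_n m_n) /\
  card_le (Pu p n) 9.
Proof.
have [s Hs] := @choose_mid (fun i => count isS (factor p i n))
  (fun i j => proj1 (balance n i j hp)).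
have [m Hm] := @choose_mid (fun i => count isM (factor p i n))
  (fun i j => proj2 (balance n i j hp)).
have Hmem : forall v, Pu p n v -> v \in Psi_list n s m.
  move=> v [i <-]; rewrite /parikh; apply: psi_mem (Hs i) (Hm i).
  by rewrite count_letters size_factor.
split; first by exists s, m.
by exists (Psi_list n s m).
Qed.
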